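(* For all (well-formed, possibly open) $\lambda$-terms $t$ and $s$, $t \approx_{\mathrm{nf}} s$ if and only if there exists a natural number $n > \max(\mathrm{fv}(t)\cup\mathrm{fv}(s))$ such that $[\![\langle t, [], n\rangle_{\mathrm{ev}}]\!] \approx_H [\![\langle s, [], n\rangle_{\mathrm{ev}}]\!]$, where $H = \{c, hd, b, k, init, rec, ch\}$.
   Context: HOcore: processes $P,Q ::= a(x).P \mid \overline{a}\langle P\rangle \mid P \parallel Q \mid x \mid 0$ ($a$ channel names, $x$ process variables, $a(x).P$ binds $x$, $a(\_).P$ when $x$ is unused, $\parallel$ associative and commutative with unit $0$, $\mathrm{fn}(P)$ the free names). LTS: $\overline{a}\langle P\rangle \xrightarrow{\overline{a}\langle P\rangle} 0$; $a(x).Q \xrightarrow{a(P)} Q\{P/x\}$; if $P \xrightarrow{l} P'$ then $P\parallel Q \xrightarrow{l} P'\parallel Q$ (and symmetrically); if $P \xrightarrow{\overline{a}\langle R\rangle} P'$ and $Q \xrightarrow{a(R)} Q'$ then $P \parallel Q \xrightarrow{\tau} P'\parallel Q'$ (and symmetrically). $\Rightarrow$ is the reflexive transitive closure of $\xrightarrow{\tau}$. For a finite set $H$: $P\downarrow^H_a$ (resp. $P\downarrow^H_{\overline a}$) if $a\notin H$ and $P\xrightarrow{a(Q)}R$ (resp. $P\xrightarrow{\overline a\langle Q\rangle}R$) for some $Q,R$; $P\Downarrow^H_\mu$ if $P\Rightarrow P'\downarrow^H_\mu$. A barbed bisimulation w.r.t. $H$ is a symmetric relation $\mathcal R$ such that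 $P\mathcal RQ$ implies: $P\downarrow^H_\mu$ implies $Q\Downarrow^H_\mu$; for all $R$ with $\mathrm{fn}(R)\cap H=\emptyset$, $(P\parallel R)\mathcal R(Q\parallel R)$; if $P\xrightarrow\tau P'$ then $Q\Rightarrow Q'$ with $P'\mathcal RQ'$. $\approx_H$ is the largest barbed bisimulation w.r.t. $H$. Terms: $t,s ::= f \mid x \mid \lambda x.t \mid t\,s$ ($f$ free variables identified with natural numbers, $x$ bound variables, terms well formed; $\mathrm{fv}(t)$ the free variables). Stacks $\pi ::= t::\pi\mid[]$. KAM: $\langle t\,s, \pi\rangle \to \langle t, s :: \pi\rangle$, $\langle \lambda x.t, s::\pi\rangle \to \langle t\{s/x\}, \pi\rangle$. Relations on terms extend to stacks pointwise (equal length, elementwise related). Normal-form bisimulation: symmetric $\mathcal R$ on terms with $t\mathcal Rs$ implying (1) if $\langle t, []\rangle \to^* \langle \lambda x.t', []\rangle$ then $\langle s,[]\rangle \to^* \langle \lambda x.s', []\rangle$ for some $s'$ with $t'\{f/x\} \mathcal R s'\{f/x\}$ for a fresh $f$; (2) if $\langle t, []\rangle \to^* \langle f, \pi\rangle$ then $\langle s,[]\rangle\to^*\langle f,\pi'\rangle$ for some $\pi'$ with $\pi\mathcal R\pi'$. $\approx_{\mathrm{nf}}$ is the largest normal-form bisimulation. NFB machine configurations: $\langle t,\pi,n\rangle_{\mathrm{ev}}$ and $\langle \pi, n\rangle_{\mathrm{cont}}$ ($n\in\mathbb N$). Translation into HOcore, using channel names $c, hd, b, k, init, rec, ch$ and flag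 names $\lambda, \mathsf{enter}, \mathsf{skip}, \mathsf{done}, suc, z$ ($p$ fresh). Internal choice: $P + Q = \overline{ch}\langle P\rangle \parallel \overline{ch}\langle Q\rangle \parallel ch(x).ch(\_).x$. Numbers: $[0] = z(\_).\overline{init}\langle 0\rangle$, $[n+1] = suc(\_).[n]$. $[\![t\,s]\!] = c(p).([\![t]\!] \parallel \overline{c}\langle \overline{hd}\langle[\![s]\!]\rangle \parallel \overline{c}\langle p\rangle\rangle)$; $[\![\lambda x.t]\!] = c(p).(p \parallel \overline{b}\langle \mathit{Restart}\rangle \parallel hd(x).b(\_).[\![t]\!])$; $[\![x]\!] = x$; $[\![f]\!] = [f]$; $\mathit{Restart} = \lambda(\_).k(x).(\overline{hd}\langle x\rangle \parallel \overline{k}\langle suc(\_).x\rangle \parallel \overline{c}\langle[\![[]]\!]\rangle \parallel \overline{b}\langle 0\rangle)$; $\mathit{Rec} = init(\_).rec(x).(x \parallel \overline{rec}\langle x\rangle \parallel \mathit{Cont})$; $\mathit{Cont} = c(p).(p \parallel \overline{b}\langle \mathsf{done}(\_).0\rangle \parallel hd(x).b(\_).\mathit{Choice}(x))$; $\mathit{Choice}(P) = \mathsf{enter}(\_).c(\_).(P \parallel \overline{c}\langle[\![[]]\!]\rangle) + \mathsf{skip}(\_).\overline{init}\langle 0\rangle$; $[\![[]]\!] = b(x).x$; $[\![t::\pi]\!] = \overline{hd}\langle[\![t]\!]\rangle \parallel \overline{c}\langle[\![\pi]\!]\rangle$; $[\![\langle t,\pi,n\rangle_{\mathrm{ev}}]\!]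 = [\![t]\!] \parallel \overline{c}\langle[\![\pi]\!]\rangle \parallel \overline{k}\langle [n]\rangle \parallel \mathit{Rec} \parallel \overline{rec}\langle\mathit{Rec}\rangle$. *)

(* Defs.v *)
From Stdlib Require Import List Arith Relations.
Import ListNotations.

Definition name := nat.

(* a(x).P is [PIn a P], where x is the de Bruijn index 0 in P;
   a(_).P is [PIn a P] with index 0 unused. *)
Inductive proc : Type :=
| PIn  : name -> proc -> proc
| POut : name -> proc -> proc
| PPar : proc -> proc -> proc
| PVar : nat -> proc
| PNil : proc.

Fixpoint shift_from (d : nat) (P : proc) : proc :=
  match P with
  | PIn a Q => PIn a (shift_from (S d) Q)
  | POut a Q => POut a (shift_from d Q)
  | PPar Q R => PPar (shift_from d Q) (shift_from d R)
  | PVar i => if d <=? i then PVar (S i) else PVar i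
  | PNil => PNil
  end.

Fixpoint shiftn (n : nat) (P : proc) : proc :=
  match n with
  | 0 => P
  | S m => shift_from 0 (shiftn m P)
  end.

Fixpoint subst_at (d : nat) (Q : proc) (P : proc) : proc :=
  match P with
  | PIn a R => PIn a (subst_at (S d) Q R)
  | POut a R => POut a (subst_at d Q R)
  | PPar R1 R2 => PPar (subst_at d Q R1) (subst_at d Q R2)
  | PVar i =>
      match Nat.compare i d with
      | Lt => PVar i
      | Eq => shiftn d Q
      | Gt => PVar (pred i)
      end
  | PNil => PNil
  end.

(* [psubst P Q] is P{Q/x} where x is the outermost bound variable of P *)
Definition psubst (P Q : proc) : proc := subst_at 0 Q P.

Fixpoint fn (P : proc) : list name :=
  match P with
  | PIn a Q => a :: fn Q
  | POut a Q => a :: fn Q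
  | PPar Q R => fn Q ++ fn R
  | PVar _ => []
  | PNil => []
  end.

Inductive label : Type :=
| LIn  : name -> proc -> label
| LOut : name -> proc -> label
| LTau : label.

Inductive step : proc -> label -> proc -> Prop :=
| st_out : forall a P, step (POut a P) (LOut a P) PNil
| st_in : forall a Q P, step (PIn a Q) (LIn a P) (psubst Q P)
| st_parl : forall P Q l P', step P l P' -> step (PPar P Q) l (PPar P' Q)
| st_parr : forall P Q l Q', step Q l Q' -> step (PPar P Q) l (PPar P Q')
| st_coml : forall P Q a R P' Q',
    step P (LOut a R) P' -> step Q (LIn a R) Q' -> step (PPar P Q) LTau (PPar P' Q')
| st_comr : forall P Q a R P' Q',
    step P (LIn a R) P' -> step Q (LOut a R) Q' -> step (PPar P Q) LTau (PPar P' Q').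

Definition tau_step (P Q : proc) : Prop := step P LTau Q.
Definition tau_star : proc -> proc -> Prop := clos_refl_trans proc tau_step.

Inductive barb : Type := BIn : name -> barb | BOut : name -> barb.

Definition sbarb (H : list name) (P : proc) (mu : barb) : Prop :=
  match mu with
  | BIn a => ~ In a H /\ exists Q R, step P (LIn a Q) R
  | BOut a => ~ In a H /\ exists Q R, step P (LOut a Q) R
  end.

Definition wbarb (H : list name) (P : proc) (mu : barb) : Prop :=
  exists P', tau_star P P' /\ sbarb H P' mu.

Definition barbed_bisimulation (H : list name) (Rel : proc -> proc -> Prop) : Prop :=
  (forall P Q, Rel P Q -> Rel Q P) /\
  (forall P Q, Rel P Q ->
     (forall mu, sbarb H P mu -> wbarb H Q mu) /\
     (forall R, (forall a, In a (fn R) -> ~ In a H) -> Rel (PPar P R) (PPar Q R)) /\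
     (forall P', tau_step P P' -> exists Q', tau_star Q Q' /\ Rel P' Q')).

Definition barbed_bisimilar (H : list name) (P Q : proc) : Prop :=
  exists Rel, barbed_bisimulation H Rel /\ Rel P Q.

(* free variables are natural numbers; bound variables are de Bruijn
   indices *)
Inductive term : Type :=
| FVar : nat -> term
| BVar : nat -> term
| Lam : term -> term
| App : term -> term -> term.

Fixpoint wf_at (k : nat) (t : term) : Prop :=
  match t with
  | FVar _ => True
  | BVar i => i < k
  | Lam t => wf_at (S k) t
  | App t s => wf_at k t /\ wf_at k s
  end.

Definition well_formed (t : term) : Prop := wf_at 0 t.

Fixpoint fv (t : term) : list nat :=
  match t with
  | FVar f => [f]
  | BVar _ => []
  | Lam t => fv t
  | App t s => fv t ++ fv s
  end.

Fixpoint open_at (k : nat) (u : term) (t : term) : term :=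
  match t with
  | FVar f => FVar f
  | BVar i => if i =? k then u else BVar i
  | Lam t => Lam (open_at (S k) u t)
  | App t s => App (open_at k u t) (open_at k u s)
  end.

(* [open t u] : for the body t of λx.t, this is t{u/x} *)
Definition open (t u : term) : term := open_at 0 u t.

Definition stack := list term.

Inductive kam_step : term * stack -> term * stack -> Prop :=
| kam_app : forall t s pi, kam_step (App t s, pi) (t, s :: pi)
| kam_beta : forall t s pi, kam_step (Lam t, s :: pi) (open t s, pi).

Definition kam_star : term * stack -> term * stack -> Prop :=
  clos_refl_trans (term * stack) kam_step.

Definition nf_bisimulation (Rel : term -> term -> Prop) : Prop :=
  (forall t s, Rel t s -> Rel s t) /\
  (forall t s, Rel t s ->
     (forall t', kam_star (t, []) (Lam t', []) ->
        exists s', kam_star (s, []) (Lam s', []) /\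
          (forall f, ~ In f (fv t') -> ~ In f (fv s') ->
             Rel (open t' (FVar f)) (open s' (FVar f)))) /\
     (forall f pi, kam_star (t, []) (FVar f, pi) ->
        exists pi', kam_star (s, []) (FVar f, pi') /\ Forall2 Rel pi pi')).

Definition nf_bisimilar (t s : term) : Prop :=
  exists Rel, nf_bisimulation Rel /\ Rel t s.

Definition n_c := 0.
Definition n_hd := 1.
Definition n_b := 2.
Definition n_k := 3.
Definition n_init := 4.
Definition n_rec := 5.
Definition n_ch := 6.
Definition n_lambda := 7.
Definition n_enter := 8.
Definition n_skip := 9.
Definition n_done := 10.
Definition n_suc := 11.
Definition n_z := 12.

Definition H_names : list name := [n_c; n_hd; n_b; n_k; n_init; n_rec; n_ch].

Definition psum (P Q : proc) : proc :=
  PPar (POut n_ch P) (PPar (POut n_ch Q) (PIn n_ch (PIn n_ch (PVar 1)))).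

Fixpoint num (n : nat) : proc :=
  match n with
  | 0 => PIn n_z (POut n_init PNil)
  | S m => PIn n_suc (num m)
  end.

Definition stack_nil : proc := PIn n_b (PVar 0).

Definition Restart : proc :=
  PIn n_lambda (PIn n_k
    (PPar (POut n_hd (PVar 0))
    (PPar (POut n_k (PIn n_suc (PVar 1)))
    (PPar (POut n_c stack_nil)
          (POut n_b PNil))))).

Definition Choice (P : proc) : proc :=
  psum (PIn n_enter (PIn n_c (PPar (shiftn 2 P) (POut n_c stack_nil))))
       (PIn n_skip (POut n_init PNil)).

Definition Cont : proc :=
  PIn n_c (PPar (PVar 0)
          (PPar (POut n_b (PIn n_done PNil))
                (PIn n_hd (PIn n_b (Choice (PVar 1)))))).

Definition Rec : proc :=
  PIn n_init (PIn n_rec (PPar (PVar 0) (PPar (POut n_rec (PVar 0)) Cont))).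

(* [tr rho t]: rho maps the de Bruijn index of a lambda-bound variable to
   the de Bruijn index of the corresponding process variable *)
Fixpoint tr (rho : nat -> nat) (t : term) : proc :=
  match t with
  | FVar f => num f
  | BVar i => PVar (rho i)
  | App t s =>
      PIn n_c (PPar (tr (fun i => S (rho i)) t)
                    (POut n_c (PPar (POut n_hd (tr (fun i => S (rho i)) s))
                                    (POut n_c (PVar 0)))))
  | Lam t =>
      PIn n_c (PPar (PVar 0)
              (PPar (POut n_b Restart)
                    (PIn n_hd (PIn n_b
                       (tr (fun i => match i with 0 => 1 | S j => rho j + 3 end) t)))))
  end.

Definition tr_term (t : term) : proc := tr (fun i => i) t.

Fixpoint tr_stack (pi : stack) : proc :=
  match pi with
  | [] => stack_nil
  | t :: pi => PPar (POut n_hd (tr_term t)) (POut n_c (tr_stack pi))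
  end.

Definition tr_ev (t : term) (pi : stack) (n : nat) : proc :=
  PPar (tr_term t)
  (PPar (POut n_c (tr_stack pi))
  (PPar (POut n_k (num n))
  (PPar Rec
        (POut n_rec Rec)))).

(* Main.v *)
Require Import Defs.
From Stdlib Require Import List Arith Relations Permutation Lia.
Import ListNotations.

From Stdlib Require Import List Arith Relations Permutation Lia.
Import ListNotations.

Definition proc_eq_dec : forall P Q : proc, {P = Q} + {P <> Q}.
Proof. decide equality; apply Nat.eq_dec. Defined.

Fixpoint flatten (P : proc) : list proc :=
  match P with
  | PPar P Q => flatten P ++ flatten Q
  | PNil => []
  | _ => [P]
  end.

Inductive sstep : list proc -> label -> list proc -> Prop :=
| ss_in : forall M a B X r, Permutation M (PIn a B :: r) ->
    sstep M (LIn a X) (r ++ flatten (psubst B X))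
| ss_out : forall M a X r, Permutation M (POut a X :: r) -> sstep M (LOut a X) r
| ss_tau : forall M a X B r, Permutation M (POut a X :: PIn a B :: r) ->
    sstep M LTau (r ++ flatten (psubst B X)).

Ltac perm_hyps x :=
  repeat match goal with
  | H : Permutation _ _ |- _ =>
      let H' := fresh "Hc" in
      pose proof (proj1 (Permutation_count_occ proc_eq_dec _ _) H x) as H';
      clear H
  end.

Lemma cnt_cons (a : proc) l x : count_occ proc_eq_dec (a :: l) x =
  (if proc_eq_dec a x then 1 else 0) + count_occ proc_eq_dec l x.
Proof. simpl. destruct (proc_eq_dec a x); reflexivity. Qed.
Lemma cnt_nil x : count_occ proc_eq_dec [] x = 0.
Proof. reflexivity. Qed.

Ltac perm :=
  apply (Permutation_count_occ proc_eq_dec); let x := fresh "x" in intro x;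
  perm_hyps x;
  repeat (rewrite ?count_occ_app, ?cnt_cons, ?cnt_nil in *);
  repeat (match goal with |- context[if ?d then _ else _] => destruct d
                     | H : context[if ?d then _ else _] |- _ => destruct d end);
  lia.

Lemma perm_test (a b c : proc) l m : Permutation l (a :: m) ->
  Permutation (b :: l ++ [c]) (m ++ [c; a; b]).
Proof. intros. perm. Qed.

Lemma sstep_perm M M' l S : Permutation M M' -> sstep M l S -> sstep M' l S.
Proof.
  intros HP H; destruct H.
  - apply ss_in. eapply Permutation_trans; [apply Permutation_sym, HP|exact H].
  - apply ss_out. eapply Permutation_trans; [apply Permutation_sym, HP|exact H].
  - eapply ss_tau. eapply Permutation_trans; [apply Permutation_sym, HP|exact H].
Qed.

Lemma sstep_inv_out M a X S : sstep M (LOut a X) S -> Permutation M (POut a X :: S).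
Proof. intro H; inversion H; subst; auto. Qed.

Lemma sstep_inv_in M a X S : sstep M (LIn a X) S ->
  exists B r, Permutation M (PIn a B :: r) /\ S = r ++ flatten (psubst B X).
Proof. intro H; inversion H; subst; eauto. Qed.

Lemma sstep_inv_tau M S : sstep M LTau S ->
  exists a X B r, Permutation M (POut a X :: PIn a B :: r) /\ S = r ++ flatten (psubst B X).
Proof. intro H; inversion H; subst; eauto 7. Qed.

Lemma sstep_app_r M K l S : sstep M l S -> exists S', sstep (M ++ K) l S' /\ Permutation S' (S ++ K).
Proof.
  intro H; destruct H.
  - eexists; split; [apply (ss_in _ a B X (r ++ K))|]; perm.
  - eexists; split; [apply (ss_out _ a X (r ++ K))|]; perm.
  - eexists; split; [apply (ss_tau _ a X B (r ++ K))|]; perm.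
Qed.

Lemma sstep_app_l M K l S : sstep M l S -> exists S', sstep (K ++ M) l S' /\ Permutation S' (K ++ S).
Proof.
  intro H; destruct H.
  - eexists; split; [apply (ss_in _ a B X (K ++ r))|]; perm.
  - eexists; split; [apply (ss_out _ a X (K ++ r))|]; perm.
  - eexists; split; [apply (ss_tau _ a X B (K ++ r))|]; perm.
Qed.

Lemma step_sstep P l P' : step P l P' ->
  exists S, sstep (flatten P) l S /\ Permutation (flatten P') S.
Proof.
  induction 1; simpl.
  - exists []; split; [apply ss_out; auto|auto].
  - exists ([] ++ flatten (psubst Q P)); split; [apply ss_in; auto|simpl; auto].
  - destruct IHstep as [S [H1 H2]].
    destruct (sstep_app_r _ (flatten Q) _ _ H1) as [S' [H3 H4]].
    exists S'; split; auto. perm.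
  - destruct IHstep as [S [H1 H2]].
    destruct (sstep_app_l _ (flatten P) _ _ H1) as [S' [H3 H4]].
    exists S'; split; auto. perm.
  - destruct IHstep1 as [S1 [H1 H2]]. destruct IHstep2 as [S2 [H3 H4]].
    apply sstep_inv_out in H1. apply sstep_inv_in in H3 as [B [r [H5 ->]]].
    exists ((S1 ++ r) ++ flatten (psubst B R)); split.
    + apply (ss_tau _ a R B (S1 ++ r)). perm.
    + perm.
  - destruct IHstep1 as [S1 [H1 H2]]. destruct IHstep2 as [S2 [H3 H4]].
    apply sstep_inv_in in H1 as [B [r [H5 ->]]]. apply sstep_inv_out in H3.
    exists ((r ++ S2) ++ flatten (psubst B R)); split.
    + apply (ss_tau _ a R B (r ++ S2)). perm.
    + perm.
Qed.

Lemma in_perm (x : proc) l : In x l -> exists r, Permutation l (x :: r).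
Proof.
  intro H; apply in_split in H as [l1 [l2 ->]]. exists (l1 ++ l2).
  apply Permutation_sym, Permutation_middle.
Qed.

Lemma perm_in_app (x : proc) l1 l2 r : Permutation (l1 ++ l2) (x :: r) ->
  (exists r1, Permutation l1 (x :: r1)) \/ (exists r2, Permutation l2 (x :: r2)).
Proof.
  intro H. assert (In x (l1 ++ l2)) as Hi.
  { eapply Permutation_in; [apply Permutation_sym, H| left; auto]. }
  apply in_app_or in Hi as [Hi|Hi]; [left|right]; apply in_perm; auto.
Qed.

Lemma perm_single_cons (x y : proc) r : Permutation [x] (y :: r) -> x = y /\ r = [].
Proof.
  intro H. pose proof (Permutation_length H) as Hl. destruct r; [|simpl in Hl; lia].
  apply Permutation_length_1 in H. auto.
Qed.

Lemma sstep_step P l S : sstep (flatten P) l S ->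
  exists P', step P l P' /\ Permutation (flatten P') S.
Proof.
  revert l S; induction P as [a0 P IHP|a0 P IHP|P1 IHP1 P2 IHP2|i|]; intros l S H; simpl in H.
  - inversion H; subst.
    + apply perm_single_cons in H0 as [He ->]. injection He as <- <-.
      exists (psubst P X). split; [constructor|simpl; auto].
    + apply perm_single_cons in H0 as [He _]; discriminate.
    + pose proof (Permutation_length H0); simpl in *; lia.
  - inversion H; subst.
    + apply perm_single_cons in H0 as [He _]; discriminate.
    + apply perm_single_cons in H0 as [He ->]. injection He as <- <-.
      exists PNil. split; [constructor|simpl; auto].
    + pose proof (Permutation_length H0); simpl in *; lia.
  - inversion H; subst.
    + destruct (perm_in_app _ _ _ _ H0) as [[r1 Hr]|[r2 Hr]].
      * destruct (IHP1 (LIn a X) (r1 ++ flatten (psubst B X))) as [P' [Hs Hp]].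
        { constructor; auto. }
        exists (PPar P' P2); split; [constructor; auto|simpl; perm].
      * destruct (IHP2 (LIn a X) (r2 ++ flatten (psubst B X))) as [P' [Hs Hp]].
        { constructor; auto. }
        exists (PPar P1 P'); split; [constructor; auto|simpl; perm].
    + destruct (perm_in_app _ _ _ _ H0) as [[r1 Hr]|[r2 Hr]].
      * destruct (IHP1 (LOut a X) r1) as [P' [Hs Hp]].
        { constructor; auto. }
        exists (PPar P' P2); split; [constructor; auto|simpl; perm].
      * destruct (IHP2 (LOut a X) r2) as [P' [Hs Hp]].
        { constructor; auto. }
        exists (PPar P1 P'); split; [constructor; auto|simpl; perm].
    + destruct (perm_in_app _ _ _ _ H0) as [[r1 Hr]|[r2 Hr]].
      * assert (Hq : Permutation (r1 ++ flatten P2) (PIn a B :: r)) by perm.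
        destruct (perm_in_app _ _ _ _ Hq) as [[r1' Hr']|[r2' Hr']].
        -- destruct (IHP1 LTau (r1' ++ flatten (psubst B X))) as [P' [Hs Hp]].
           { apply (ss_tau _ a X B r1'). perm. }
           exists (PPar P' P2); split; [constructor; auto|simpl; perm].
        -- destruct (IHP1 (LOut a X) r1) as [P' [Hs Hp]]. { constructor; auto. }
           destruct (IHP2 (LIn a X) (r2' ++ flatten (psubst B X))) as [Q' [Hs' Hp']].
           { constructor; auto. }
           exists (PPar P' Q'); split; [eapply st_coml; eauto|simpl; perm].
      * assert (Hq : Permutation (flatten P1 ++ r2) (PIn a B :: r)) by perm.
        destruct (perm_in_app _ _ _ _ Hq) as [[r1' Hr']|[r2' Hr']].
        -- destruct (IHP1 (LIn a X) (r1' ++ flatten (psubst B X))) as [P' [Hs Hp]].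
           { constructor; auto. }
           destruct (IHP2 (LOut a X) r2) as [Q' [Hs' Hp']]. { constructor; auto. }
           exists (PPar P' Q'); split; [eapply st_comr; eauto|simpl; perm].
        -- destruct (IHP2 LTau (r2' ++ flatten (psubst B X))) as [P' [Hs Hp]].
           { apply (ss_tau _ a X B r2'). perm. }
           exists (PPar P1 P'); split; [constructor; auto|simpl; perm].
  - inversion H; subst.
    + apply perm_single_cons in H0 as [He _]; discriminate.
    + apply perm_single_cons in H0 as [He _]; discriminate.
    + pose proof (Permutation_length H0); simpl in *; lia.
  - inversion H; subst; pose proof (Permutation_length H0); simpl in *; lia.
Qed.

Lemma fn_shift_from d P : fn (shift_from d P) = fn P.
Proof.
  revert d; induction P; intros d; simpl; try rewrite IHP; try rewrite IHP1, IHP2; auto.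
  destruct (d <=? n); auto.
Qed.

Lemma fn_shiftn n P : fn (shiftn n P) = fn P.
Proof. induction n; simpl; auto. rewrite fn_shift_from; auto. Qed.

Lemma fn_subst d Q P : incl (fn (subst_at d Q P)) (fn P ++ fn Q).
Proof.
  revert d; induction P; intros d; simpl; intros x Hx.
  - destruct Hx as [->|Hx]; [left; auto|right]. apply IHP in Hx. apply in_app_or in Hx as [?|?]; apply in_or_app; auto.
  - destruct Hx as [->|Hx]; [left; auto|right]. apply IHP in Hx. apply in_app_or in Hx as [?|?]; apply in_or_app; auto.
  - apply in_app_or in Hx as [Hx|Hx]; [apply IHP1 in Hx|apply IHP2 in Hx];
      apply in_app_or in Hx as [?|?]; apply in_or_app; auto; left; apply in_or_app; auto.
  - destruct (Nat.compare n d); simpl in Hx; try tauto. rewrite fn_shiftn in Hx; auto.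
  - destruct Hx.
Qed.

Lemma fn_flatten P c : In c (flatten P) -> incl (fn c) (fn P).
Proof.
  induction P; simpl; intros H; try (destruct H as [<-|[]]; apply incl_refl).
  - apply in_app_or in H as [H|H]; [apply IHP1 in H|apply IHP2 in H]; intros x Hx; apply in_or_app; auto.
  - destruct H.
Qed.

Definition noH (G : list proc) := forall c a, In c G -> In a (fn c) -> ~ In a H_names.

Lemma noH_perm G G' : Permutation G G' -> noH G -> noH G'.
Proof. intros HP H c a Hc. apply H. eapply Permutation_in; [apply Permutation_sym, HP|auto]. Qed.

Lemma noH_app G G' : noH G -> noH G' -> noH (G ++ G').
Proof. intros H1 H2 c a Hc. apply in_app_or in Hc as [Hc|Hc]; [apply H1|apply H2]; auto. Qed.

Lemma noH_app_inv G G' : noH (G ++ G') -> noH G /\ noH G'.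
Proof. intros H; split; intros c a Hc; apply H; apply in_or_app; auto. Qed.

Lemma noH_flatten_psubst a B X : noH [PIn a B; POut a X] -> noH (flatten (psubst B X)).
Proof.
  intros H c x Hc Hx. apply fn_flatten in Hc. apply Hc, fn_subst in Hx.
  apply in_app_or in Hx as [Hx|Hx].
  - apply (H (PIn a B)); simpl; auto.
  - apply (H (POut a X)); simpl; auto.
Qed.

Fixpoint nvo (P : proc) : Prop :=
  match P with
  | PIn _ Q => nvo Q
  | POut a Q => In a H_names /\ nvo Q
  | PPar P Q => nvo P /\ nvo Q
  | _ => True
  end.

Lemma nvo_shift_from d P : nvo P -> nvo (shift_from d P).
Proof. revert d; induction P; simpl; intros d H; intuition. destruct (d <=? n); simpl; auto. Qed.

Lemma nvo_shiftn n P : nvo P -> nvo (shiftn n P).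
Proof. induction n; simpl; auto. intros; apply nvo_shift_from; auto. Qed.

Lemma nvo_subst d Q P : nvo Q -> nvo P -> nvo (subst_at d Q P).
Proof.
  revert d; induction P; simpl; intros d HQ H; intuition.
  destruct (Nat.compare n d); simpl; auto. apply nvo_shiftn; auto.
Qed.

Lemma nvo_flatten P : nvo P -> Forall nvo (flatten P).
Proof.
  induction P; simpl; intros H; try (constructor; [exact H|constructor]).
  - apply Forall_app; intuition.
  - constructor.
Qed.

Definition NV (M : list proc) := Forall nvo M.

Lemma NV_perm M M' : Permutation M M' -> NV M -> NV M'.
Proof. intros HP H. unfold NV in *. rewrite Forall_forall in *. intros x Hx. apply H.
  eapply Permutation_in; [apply Permutation_sym, HP|auto]. Qed.

Lemma NV_in M x : NV M -> In x M -> nvo x.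
Proof. unfold NV; rewrite Forall_forall; auto. Qed.

Lemma NV_sstep M l S : NV M -> sstep M l S ->
  (forall a X, l = LIn a X -> nvo X) -> NV S.
Proof.
  intros HN H Hl. destruct H.
  - apply NV_perm in H; auto. inversion H; subst. apply Forall_app; split; auto.
    apply nvo_flatten, nvo_subst; eauto.
  - apply NV_perm in H; auto. inversion H; auto.
  - apply NV_perm in H; auto. inversion H; subst. inversion H3; subst.
    apply Forall_app; split; auto. apply nvo_flatten, nvo_subst; auto. apply H2.
Qed.

Lemma NV_out M a X r : NV M -> Permutation M (POut a X :: r) -> In a H_names.
Proof. intros HN HP. apply NV_perm in HP; auto. inversion HP; subst. apply H1. Qed.

Definition stau (M M' : list proc) := exists S, sstep M LTau S /\ Permutation S M'.
Definition sstar := clos_refl_trans _ stau.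

Lemma NV_sstar M M' : NV M -> sstar M M' -> NV M'.
Proof.
  induction 2; auto. destruct H0 as [S [H1 H2]]. eapply NV_perm; [exact H2|].
  eapply NV_sstep; eauto. intros; discriminate.
Qed.

Lemma lift_stau N N' Q G : stau N N' -> Permutation (flatten Q) (N ++ G) ->
  exists Q', tau_step Q Q' /\ Permutation (flatten Q') (N' ++ G).
Proof.
  intros [S [H1 H2]] HP.
  destruct (sstep_app_r _ G _ _ H1) as [S' [H3 H4]].
  apply (sstep_perm _ (flatten Q)) in H3; [|apply Permutation_sym; auto].
  apply sstep_step in H3 as [Q' [H5 H6]]. exists Q'; split; auto. perm.
Qed.

Lemma lift_sstar N N' Q G : sstar N N' -> Permutation (flatten Q) (N ++ G) ->
  exists Q', tau_star Q Q' /\ Permutation (flatten Q') (N' ++ G).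
Proof.
  intros H; apply clos_rt_rt1n in H. revert Q; induction H; intros Q HP.
  - exists Q; split; auto. apply rt_refl.
  - destruct (lift_stau _ _ _ _ H HP) as [Q1 [H1 H2]].
    destruct (IHclos_refl_trans_1n _ H2) as [Q2 [H3 H4]].
    exists Q2; split; auto. eapply rt_trans; [apply rt_step; exact H1|exact H3].
Qed.

Lemma sstar_trans A B C : sstar A B -> sstar B C -> sstar A C.
Proof. intros; eapply rt_trans; eauto. Qed.

Lemma sstar_step A B : stau A B -> sstar A B.
Proof. intros; apply rt_step; auto. Qed.

Lemma sstar_refl A : sstar A A.
Proof. apply rt_refl. Qed.

Lemma stau_perm A A' B : Permutation A A' -> stau A B -> stau A' B.
Proof. intros HP [S [H1 H2]]. exists S; split; auto. eapply sstep_perm; eauto. Qed.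

Lemma stau_perm_r A B B' : Permutation B B' -> stau A B -> stau A B'.
Proof. intros HP [S [H1 H2]]. exists S; split; auto. eapply Permutation_trans; eauto. Qed.

Lemma sstar_perm A A' B : Permutation A A' -> sstar A B -> exists B', sstar A' B' /\ Permutation B B'.
Proof.
  intros HP H. apply clos_rt_rt1n in H. revert A' HP; induction H; intros A' HP.
  - exists A'; split; auto. apply rt_refl.
  - apply (stau_perm _ A') in H; auto.
    destruct (IHclos_refl_trans_1n y) as [B' [H2 H3]]; [apply Permutation_refl|].
    exists B'; split; auto. eapply rt_trans; [apply rt_step; eauto|auto].
Qed.

Definition Lift (Rm : list proc -> list proc -> Prop) (A B : list proc) :=
  exists M N, Permutation A M /\ Permutation B N /\ Rm M N.

Definition MB (Rm : list proc -> list proc -> Prop) :=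
  forall M N, Rm M N ->
    Rm N M /\ NV M /\
    (forall S, sstep M LTau S -> exists N', sstar N N' /\ Lift Rm S N') /\
    (forall a X S, ~ In a H_names -> sstep M (LIn a X) S ->
       exists N1 N2 N3, sstar N N1 /\ sstep N1 (LIn a X) N2 /\ sstar N2 N3 /\ Lift Rm S N3).

Lemma MB_bb Rm : MB Rm -> forall M N P Q, Rm M N ->
  Permutation (flatten P) M -> Permutation (flatten Q) N -> barbed_bisimilar H_names P Q.
Proof.
  intros HMB M0 N0 P0 Q0 HR0 HP0 HQ0.
  set (Rel := fun P Q => exists M N G, Permutation (flatten P) (M ++ G) /\
                 Permutation (flatten Q) (N ++ G) /\ noH G /\ Rm M N).
  exists Rel; split.
  2:{ exists M0, N0, []; rewrite !app_nil_r; repeat split; auto. intros c a []. }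
  split.
  { intros P Q [M [N [G [H1 [H2 [H3 H4]]]]]]. exists N, M, G; repeat split; auto.
    apply HMB; auto. }
  intros P Q [M [N [G [H1 [H2 [H3 H4]]]]]].
  destruct (HMB _ _ H4) as [Hsym [HNV [Htau Hin]]].
  split; [|split].
  -
    intros [a|a] Hb; simpl in Hb; destruct Hb as [Ha [X [R HR]]].
    + apply step_sstep in HR as [S [HS _]]. apply (sstep_perm _ _ _ _ H1) in HS.
      apply sstep_inv_in in HS as [B [r [Hp ->]]].
      destruct (perm_in_app _ _ _ _ Hp) as [[rM HM]|[rG HG]].
      * destruct (Hin a X (rM ++ flatten (psubst B X)) Ha) as [N1 [N2 [N3 [Hs1 [Hs2 _]]]]].
        { constructor; auto. }
        destruct (lift_sstar _ _ _ _ Hs1 H2) as [Q1 [Ht Hq]].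
        destruct (sstep_app_r _ G _ _ Hs2) as [S' [Hs3 _]].
        apply (sstep_perm _ (flatten Q1)) in Hs3; [|apply Permutation_sym; auto].
        apply sstep_step in Hs3 as [Q2 [Hst _]].
        exists Q1; split; auto. simpl; split; eauto.
      * assert (sstep (flatten Q) (LIn a X) ((N ++ rG) ++ flatten (psubst B X))) as Hs.
        { constructor. perm. }
        apply sstep_step in Hs as [Q2 [Hst _]].
        exists Q; split; [apply rt_refl|]. simpl; split; eauto.
    + apply step_sstep in HR as [S [HS _]]. apply (sstep_perm _ _ _ _ H1) in HS.
      apply sstep_inv_out in HS.
      destruct (perm_in_app _ _ _ _ HS) as [[rM HM]|[rG HG]].
      * exfalso. apply Ha. eapply NV_out; eauto.
      * assert (sstep (flatten Q) (LOut a X) (N ++ rG)) as Hs.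
        { constructor. perm. }
        apply sstep_step in Hs as [Q2 [Hst _]].
        exists Q; split; [apply rt_refl|]. simpl; split; eauto.
  -
    intros R HR. exists M, N, (G ++ flatten R). simpl. repeat split.
    + perm.
    + perm.
    + apply noH_app; auto. intros c a Hc Ha. apply (HR a). apply (fn_flatten R c); auto.
    + auto.
  -
    intros P' Hst. apply step_sstep in Hst as [S [HS HP']].
    apply (sstep_perm _ _ _ _ H1) in HS.
    apply sstep_inv_tau in HS as [a [X [B [r [Hp ->]]]]].
    destruct (perm_in_app _ _ _ _ Hp) as [[rM HM]|[rG HG]].
    + assert (Hq : Permutation (rM ++ G) (PIn a B :: r)) by perm.
      destruct (perm_in_app _ _ _ _ Hq) as [[rM' HM']|[rG' HG']].
      * destruct (Htau (rM' ++ flatten (psubst B X))) as [N' [Hs1 [M2 [N2 [Hm [Hn HR2]]]]]].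
        { apply (ss_tau _ a X B rM'). perm. }
        destruct (lift_sstar _ _ _ _ Hs1 H2) as [Q1 [Ht Hq1]].
        exists Q1; split; auto. exists M2, N2, G; repeat split; auto; perm.
      * exfalso. assert (Hx : In a H_names) by (eapply NV_out; eauto).
        apply (H3 (PIn a B) a); [|simpl; auto|auto].
        eapply Permutation_in; [apply Permutation_sym, HG'|left; auto].
    + assert (Hq : Permutation (M ++ rG) (PIn a B :: r)) by perm.
      assert (Ha : ~ In a H_names).
      { apply (H3 (POut a X) a); [|simpl; auto].
        eapply Permutation_in; [apply Permutation_sym, HG|left; auto]. }
      destruct (perm_in_app _ _ _ _ Hq) as [[rM' HM']|[rG' HG']].
      * destruct (Hin a X (rM' ++ flatten (psubst B X)) Ha) as
            [N1 [N2 [N3 [Hs1 [Hs2 [Hs3 [M4 [N4 [Hm [Hn HR4]]]]]]]]]].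
        { constructor; auto. }
        destruct (lift_sstar _ _ _ _ Hs1 H2) as [Q1 [Ht1 Hq1]].
        apply sstep_inv_in in Hs2 as [B' [r1 [Hp1 ->]]].
        assert (Hs : sstep (flatten Q1) LTau ((r1 ++ rG) ++ flatten (psubst B' X))).
        { apply (ss_tau _ a X B' (r1 ++ rG)). perm. }
        apply sstep_step in Hs as [Q2 [Ht2 Hq2]].
        assert (Hq2' : Permutation (flatten Q2) ((r1 ++ flatten (psubst B' X)) ++ rG)) by perm.
        destruct (lift_sstar _ _ _ _ Hs3 Hq2') as [Q3 [Ht3 Hq3]].
        exists Q3; split.
        { eapply rt_trans; [exact Ht1|]. eapply rt_trans; [apply rt_step; exact Ht2|exact Ht3]. }
        exists M4, N4, rG; repeat split.
        -- perm.
        -- perm.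
        -- apply noH_perm in HG; auto. intros c x Hc; apply HG; simpl; auto.
        -- auto.
      *
        assert (HG2 : Permutation G (POut a X :: PIn a B :: rG')) by perm.
        assert (Hs : sstep (flatten Q) LTau ((N ++ rG') ++ flatten (psubst B X))).
        { apply (ss_tau _ a X B (N ++ rG')). perm. }
        apply sstep_step in Hs as [Q2 [Ht2 Hq2]].
        exists Q2; split; [apply rt_step; auto|].
        exists M, N, (rG' ++ flatten (psubst B X)); repeat split; auto; try perm.
        apply noH_perm in HG2; auto.
        apply noH_app.
        { intros c x Hc; apply HG2; simpl; auto. }
        apply (noH_flatten_psubst a). intros c x Hc; apply HG2; simpl in Hc |- *; intuition.
Qed.

From Stdlib Require Import List Arith Relations Permutation Lia.
Import ListNotations.

Fixpoint closed_at (n : nat) (P : proc) : Prop :=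
  match P with
  | PIn _ Q => closed_at (S n) Q
  | POut _ Q => closed_at n Q
  | PPar P Q => closed_at n P /\ closed_at n Q
  | PVar i => i < n
  | PNil => True
  end.

Lemma closed_mono P : forall n n', closed_at n P -> n <= n' -> closed_at n' P.
Proof. induction P; simpl; intros m m' H Hn; try tauto.
  - eapply IHP; eauto; lia.
  - eapply IHP; eauto.
  - destruct H; split; eauto.
  - lia. Qed.

Lemma shift_closed P : forall n d, closed_at n P -> n <= d -> shift_from d P = P.
Proof.
  induction P; simpl; intros m d H Hd; try (f_equal; eapply IHP; eauto; lia).
  - destruct H; f_equal; eauto.
  - destruct (Nat.leb_spec d n); auto. lia.
  - auto.
Qed.

Lemma shiftn_closed P k : closed_at 0 P -> shiftn k P = P.
Proof. intro H; induction k; simpl; auto. rewrite IHk. eapply shift_closed; eauto; lia. Qed.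

Lemma subst_closed P : forall n d Q, closed_at n P -> n <= d -> subst_at d Q P = P.
Proof.
  induction P; simpl; intros m d Q H Hd; try (f_equal; eapply IHP; eauto; lia).
  - destruct H; f_equal; eauto.
  - destruct (Nat.compare_spec n d); auto; lia.
  - auto.
Qed.

Lemma num_closed f : closed_at 0 (num f).
Proof. induction f; simpl; auto. eapply closed_mono; eauto. Qed.

Lemma Restart_closed : closed_at 0 Restart.
Proof. simpl; repeat split; lia. Qed.

Lemma wf_mono t : forall k k', wf_at k t -> k <= k' -> wf_at k' t.
Proof. induction t; simpl; intros k0 k' H Hk; try tauto.
  - lia.
  - eapply IHt; eauto; lia.
  - destruct H; split; eauto. Qed.

Lemma tr_closed t : forall k rho n, wf_at k t -> (forall i, i < k -> rho i < n) ->
  closed_at n (tr rho t).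
Proof.
  induction t; simpl; intros k rho m Hw Hr.
  - eapply closed_mono; [apply num_closed|lia].
  - auto.
  - repeat split; try lia;
    first [ eapply closed_mono; [apply Restart_closed|lia]
          | eapply IHt; eauto; intros [|i] Hi; [lia|]; specialize (Hr i); lia].
  - destruct Hw; repeat split; try lia.
    + eapply IHt1; eauto. intros i Hi; specialize (Hr i Hi); lia.
    + eapply IHt2; eauto. intros i Hi; specialize (Hr i Hi); lia.
Qed.

Lemma tr_ext_wf t : forall k rho rho', wf_at k t -> (forall i, i < k -> rho i = rho' i) ->
  tr rho t = tr rho' t.
Proof.
  induction t; simpl; intros k rho rho' Hw Hr; auto.
  - erewrite IHt; eauto. intros [|i] Hi; auto. rewrite Hr; auto; lia.
  - destruct Hw. rewrite (IHt1 k (fun i => S (rho i)) (fun i => S (rho' i))); auto.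
    rewrite (IHt2 k (fun i => S (rho i)) (fun i => S (rho' i))); auto.
Qed.

Lemma tr_ext t : forall rho rho', (forall i, rho i = rho' i) -> tr rho t = tr rho' t.
Proof.
  induction t; simpl; intros rho rho' Hr; try (rewrite Hr); auto.
  - erewrite IHt; eauto. intros [|i]; auto.
  - rewrite (IHt1 (fun i => S (rho i)) (fun i => S (rho' i))); auto.
    rewrite (IHt2 (fun i => S (rho i)) (fun i => S (rho' i))); auto.
Qed.

Lemma tr_wf0 t rho : wf_at 0 t -> tr rho t = tr_term t.
Proof. intro H; eapply tr_ext_wf; eauto; intros; lia. Qed.

Lemma tr_term_closed t : wf_at 0 t -> closed_at 0 (tr_term t).
Proof. intro H; eapply tr_closed; eauto; intros; lia. Qed.

Lemma tr_term_subst t d X : wf_at 0 t -> subst_at d X (tr_term t) = tr_term t.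
Proof. intro H; eapply subst_closed; [apply tr_term_closed; auto|lia]. Qed.

Lemma tr_term_shift t d : wf_at 0 t -> shift_from d (tr_term t) = tr_term t.
Proof. intro H; eapply shift_closed; [apply tr_term_closed; auto|lia]. Qed.

Lemma tr_term_shiftn t k : wf_at 0 t -> shiftn k (tr_term t) = tr_term t.
Proof. intro H; apply shiftn_closed, tr_term_closed; auto. Qed.

Lemma tr_flatten t rho : wf_at 0 t -> flatten (tr rho t) = [tr rho t].
Proof. destruct t; simpl; intros; try lia; try destruct n; reflexivity. Qed.

Definition wfs (pi : stack) := Forall (wf_at 0) pi.

Lemma tr_stack_closed pi : wfs pi -> closed_at 0 (tr_stack pi).
Proof.
  induction 1; simpl; auto. repeat split; auto. apply tr_term_closed; auto.
Qed.

Lemma num_subst f d X : subst_at d X (num f) = num f.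
Proof. eapply subst_closed; [apply num_closed|lia]. Qed.
Lemma num_shift f d : shift_from d (num f) = num f.
Proof. eapply shift_closed; [apply num_closed|lia]. Qed.
Lemma num_shiftn f k : shiftn k (num f) = num f.
Proof. apply shiftn_closed, num_closed. Qed.
Lemma stack_subst pi d X : wfs pi -> subst_at d X (tr_stack pi) = tr_stack pi.
Proof. intro; eapply subst_closed; [apply tr_stack_closed; auto|lia]. Qed.
Lemma Restart_subst d X : subst_at d X Restart = Restart.
Proof. eapply subst_closed; [apply Restart_closed|lia]. Qed.

Definition lower (d : nat) (rho : nat -> nat) (i : nat) : nat :=
  if rho i <=? d then rho i else pred (rho i).

Lemma tr_subst t : forall rho d j0 s, wf_at 0 s -> (forall i, rho i = d <-> i = j0) ->
  subst_at d (tr_term s) (tr rho t) = tr (lower d rho) (open_at j0 s t).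
Proof.
  induction t; intros rho d j0 s Hs Hr; cbn [subst_at tr open_at].
  - apply num_subst.
  - destruct (Nat.eqb_spec n j0).
    + subst. assert (rho j0 = d) as -> by (apply Hr; auto).
      rewrite Nat.compare_refl. rewrite tr_term_shiftn by auto. symmetry; apply tr_wf0; auto.
    + simpl. unfold lower. assert (rho n <> d) by (intro E; apply Hr in E; auto).
      destruct (Nat.compare_spec (rho n) d); destruct (Nat.leb_spec (rho n) d); auto; lia.
  - rewrite Restart_subst. do 5 f_equal.
    rewrite (IHt _ (S (S (S d))) (S j0)); auto.
    + apply tr_ext. intros [|i]; unfold lower; simpl.
      * destruct (Nat.leb_spec 1 (S (S (S d)))); lia.
      * destruct (Nat.leb_spec (rho i + 3) (S (S (S d)))), (Nat.leb_spec (rho i) d); lia.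
    + intros [|i]; split; intro E; try lia.
      * f_equal. apply Hr. lia.
      * injection E as E. apply Hr in E. lia.
  - f_equal. f_equal.
    + rewrite (IHt1 _ (S d) j0); auto.
      * apply tr_ext. intros i; unfold lower.
        destruct (Nat.leb_spec (S (rho i)) (S d)), (Nat.leb_spec (rho i) d); lia.
      * intros i; rewrite <- Hr; lia.
    + do 3 f_equal. rewrite (IHt2 _ (S d) j0); auto.
      * apply tr_ext. intros i; unfold lower.
        destruct (Nat.leb_spec (S (rho i)) (S d)), (Nat.leb_spec (rho i) d); lia.
      * intros i; rewrite <- Hr; lia.
Qed.

Lemma wf_open t : forall k s, wf_at (S k) t -> wf_at 0 s -> wf_at k (open_at k s t).
Proof.
  induction t; simpl; intros k s Ht Hs; auto.
  - destruct (Nat.eqb_spec n k); simpl; [eapply wf_mono; eauto; lia|lia].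
  - intuition.
Qed.

(* the body of a translated lambda, after receiving s on hd and something on b *)
Definition rhoL (rho : nat -> nat) (i : nat) : nat :=
  match i with 0 => 1 | S j => rho j + 3 end.

Lemma tr_body_subst t s : wf_at 1 t -> wf_at 0 s ->
  subst_at 1 (tr_term s) (tr (rhoL (fun i => i)) t) = tr_term (open t s).
Proof.
  intros Ht Hs. rewrite (tr_subst _ _ 1 0); auto.
  - apply tr_wf0. apply wf_open; auto.
  - intros [|i]; simpl; lia.
Qed.

From Stdlib Require Import List Arith Relations Permutation Lia.
Import ListNotations.

Lemma kam_det c c1 c2 : kam_step c c1 -> kam_step c c2 -> c1 = c2.
Proof. intros H1 H2; inversion H1; subst; inversion H2; subst; auto. Qed.

Definition terminal (c : term * stack) := forall c', ~ kam_step c c'.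

Lemma term_lam t : terminal (Lam t, []).
Proof. intros c H; inversion H. Qed.
Lemma term_fvar f pi : terminal (FVar f, pi).
Proof. intros c H; inversion H. Qed.

Lemma kam_star_det c c1 c2 : kam_star c c1 -> kam_star c c2 -> terminal c2 -> kam_star c1 c2.
Proof.
  intros H1 H2 Ht. apply clos_rt_rt1n in H1. revert H2. induction H1; intros H2; auto.
  apply clos_rt_rt1n in H2. inversion H2; subst.
  - exfalso; eapply Ht; eauto.
  - apply IHclos_refl_trans_1n. rewrite (kam_det _ _ _ H H0). apply clos_rt1n_rt; auto.
Qed.

Definition wfc (c : term * stack) := wf_at 0 (fst c) /\ wfs (snd c).

Lemma kam_wf c c' : kam_step c c' -> wfc c -> wfc c'.
Proof.
  intros H [H1 H2]; inversion H; subst; simpl in *.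
  - destruct H1; split; auto. constructor; auto.
  - inversion H2; subst. split; auto. apply wf_open; auto.
Qed.

Lemma kam_star_wf c c' : kam_star c c' -> wfc c -> wfc c'.
Proof. induction 1; auto. apply kam_wf; auto. Qed.

Definition fvc (c : term * stack) := fv (fst c) ++ flat_map fv (snd c).

Lemma fv_open t : forall k u, incl (fv (open_at k u t)) (fv t ++ fv u).
Proof.
  induction t; simpl; intros k u x Hx.
  - destruct Hx as [<-|[]]; left; reflexivity.
  - destruct (n =? k); simpl in Hx; [auto|destruct Hx].
  - apply IHt in Hx; auto.
  - rewrite !in_app_iff in *. destruct Hx as [Hx|Hx]; [apply IHt1 in Hx|apply IHt2 in Hx];
      rewrite in_app_iff in *; tauto.
Qed.

Lemma kam_fv c c' : kam_step c c' -> incl (fvc c') (fvc c).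
Proof.
  intros H; inversion H; subst; unfold fvc; simpl; intros x Hx.
  - rewrite <- app_assoc. auto.
  - rewrite !in_app_iff in *. destruct Hx as [Hx|Hx]; [apply fv_open in Hx|];
    rewrite ?in_app_iff in *; tauto.
Qed.

Lemma kam_star_fv c c' : kam_star c c' -> incl (fvc c') (fvc c).
Proof. induction 1. apply kam_fv; auto. apply incl_refl. eapply incl_tran; eauto. Qed.

From Stdlib Require Import List Arith Relations Permutation Lia.
Import ListNotations.

Definition Eb m := [POut n_k (num m); Rec; POut n_rec Rec].
Definition Ev t pi m := tr_term t :: POut n_c (tr_stack pi) :: Eb m.
Definition LBody t := tr (rhoL (fun i => i)) t.
Definition HW t := PIn n_hd (PIn n_b (LBody t)).
Definition LA1 u s pi m := POut n_hd (tr_term s) :: POut n_c (tr_stack pi) :: POut n_b Restart :: HW u :: Eb m.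
Definition LA2 u s pi m := POut n_c (tr_stack pi) :: POut n_b Restart :: PIn n_b (tr_term (open u s)) :: Eb m.
Definition LB1 u m := stack_nil :: POut n_b Restart :: HW u :: Eb m.
Definition LB2 u m := Restart :: HW u :: Eb m.
Definition RB := PIn n_k (PPar (POut n_hd (PVar 0)) (PPar (POut n_k (PIn n_suc (PVar 1)))
                   (PPar (POut n_c stack_nil) (POut n_b PNil)))).
Definition LB3 u m := RB :: HW u :: Eb m.
Definition LB4 u m := [POut n_hd (num m); POut n_k (num (S m)); POut n_c (tr_stack []); POut n_b PNil;
                       HW u; Rec; POut n_rec Rec].
Definition LB5 u m := [PIn n_b (tr_term (open u (FVar m))); POut n_k (num (S m)); POut n_c (tr_stack []);
                       POut n_b PNil; Rec; POut n_rec Rec].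
Definition K0 pi m := POut n_init PNil :: POut n_c (tr_stack pi) :: Eb m.
Definition RecB := PIn n_rec (PPar (PVar 0) (PPar (POut n_rec (PVar 0)) Cont)).
Definition K1 pi m := [RecB; POut n_c (tr_stack pi); POut n_k (num m); POut n_rec Rec].
Definition K2 pi m := Cont :: POut n_c (tr_stack pi) :: Eb m.
Definition done0 := PIn n_done PNil.
Definition HWc := PIn n_hd (PIn n_b (Choice (PVar 1))).
Definition K3 pi m := match pi with
  | [] => stack_nil :: POut n_b done0 :: HWc :: Eb m
  | t :: p => POut n_hd (tr_term t) :: POut n_c (tr_stack p) :: POut n_b done0 :: HWc :: Eb m
  end.
Definition Dn m := done0 :: HWc :: Eb m.
Definition In_ m := HWc :: Eb m.
Definition EP T := PIn n_enter (PIn n_c (PPar T (POut n_c stack_nil))).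
Definition SP := PIn n_skip (POut n_init PNil).
Definition CH := PIn n_ch (PIn n_ch (PVar 1)).
Definition K4 t p m := PIn n_b (psum (EP (tr_term t)) SP) :: POut n_c (tr_stack p) :: POut n_b done0 :: Eb m.
Definition K5 t p m := POut n_ch (EP (tr_term t)) :: POut n_ch SP :: CH :: POut n_c (tr_stack p) :: Eb m.
Definition K6e t p m := POut n_ch SP :: PIn n_ch (EP (tr_term t)) :: POut n_c (tr_stack p) :: Eb m.
Definition K6s t p m := POut n_ch (EP (tr_term t)) :: PIn n_ch SP :: POut n_c (tr_stack p) :: Eb m.
Definition We t p m := EP (tr_term t) :: POut n_c (tr_stack p) :: Eb m.
Definition Ws p m := SP :: POut n_c (tr_stack p) :: Eb m.
Definition We' t p m := PIn n_c (PPar (tr_term t) (POut n_c stack_nil)) :: POut n_c (tr_stack p) :: Eb m.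

Lemma Restart_eq : Restart = PIn n_lambda RB. Proof. reflexivity. Qed.
Lemma Rec_eq : Rec = PIn n_init RecB. Proof. reflexivity. Qed.
Lemma Cont_eq : Cont = PIn n_c (PPar (PVar 0) (PPar (POut n_b done0) HWc)). Proof. reflexivity. Qed.

Definition Hlab (l : label) := match l with LTau => False | LIn a _ => In a H_names | LOut _ _ => True end.

Ltac unfold_all_states :=
  unfold Ev, LA1, LA2, LB1, LB2, LB3, LB4, LB5, K0, K1, K2, K3, Dn, In_, K4, K5, K6e, K6s,
    We, Ws, We' in *; unfold Eb in *.

Ltac split_or H := repeat match type of H with _ \/ _ => destruct H as [H|H] end; try contradiction.

Ltac hlab := left; simpl; unfold H_names, n_c, n_hd, n_b, n_k, n_init, n_rec, n_ch; simpl; tauto.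

Ltac hnf_l H := let T := type of H in
  match T with ?c = ?d => let c' := eval hnf in c in change (c' = d) in H end.

Ltac inv_tac l H :=
  let a := fresh "a" in let X := fresh "X" in
  destruct l as [a X|a X|];
  [ let B := fresh "B" in let r := fresh "r" in let Hp := fresh "Hp" in let Hi := fresh "Hi" in
    apply sstep_inv_in in H as [B [r [Hp ->]]];
    pose proof (Permutation_in _ (Permutation_sym Hp) (in_eq _ _)) as Hi;
    unfold_all_states; cbn [In app] in Hi; split_or Hi;
    try discriminate Hi; hnf_l Hi; injection Hi as <- <-; try hlab
  | left; exact I
  | let B := fresh "B" in let r := fresh "r" in let Hp := fresh "Hp" in
    let Hi := fresh "Hi" in let Hj := fresh "Hj" in
    apply sstep_inv_tau in H as [a [X [B [r [Hp ->]]]]];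
    pose proof (Permutation_in _ (Permutation_sym Hp) (in_eq _ _)) as Hi;
    pose proof (Permutation_in _ (Permutation_sym Hp) (in_cons _ _ _ (in_eq _ _))) as Hj;
    unfold_all_states; cbn [In app] in Hi, Hj; split_or Hi; try discriminate Hi;
    hnf_l Hi; injection Hi as <- <-; split_or Hj; try discriminate Hj; hnf_l Hj; injection Hj as <-;
    try discriminate ].



Lemma tr_term_flatten t : wf_at 0 t -> flatten (tr_term t) = [tr_term t].
Proof. apply tr_flatten. Qed.

Lemma closed_Rec : closed_at 0 Rec. Proof. simpl; repeat split; lia. Qed.
Lemma closed_RB : closed_at 0 RB. Proof. simpl; repeat split; lia. Qed.
Lemma closed_RecB : closed_at 0 RecB. Proof. simpl; repeat split; lia. Qed.
Lemma closed_Cont : closed_at 0 Cont. Proof. simpl; repeat split; lia. Qed.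
Lemma closed_HWc : closed_at 0 HWc. Proof. simpl; repeat split; lia. Qed.
Lemma closed_done0 : closed_at 0 done0. Proof. simpl; repeat split; lia. Qed.
Lemma closed_SP : closed_at 0 SP. Proof. simpl; repeat split; lia. Qed.
Lemma closed_CH : closed_at 0 CH. Proof. simpl; repeat split; lia. Qed.
Lemma closed_stack_nil : closed_at 0 stack_nil. Proof. simpl; repeat split; lia. Qed.
Lemma closed_HW u : wf_at 1 u -> closed_at 0 (HW u).
Proof. intros W. simpl. eapply tr_closed; eauto. intros [|i] Hi; simpl; lia. Qed.
Lemma closed_EP t : wf_at 0 t -> closed_at 0 (EP (tr_term t)).
Proof. intros W. simpl. repeat split; try lia. eapply closed_mono; [apply tr_term_closed; auto|lia]. Qed.

Lemma subst_c P d X : closed_at 0 P -> subst_at d X P = P.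
Proof. intros; eapply subst_closed; eauto; lia. Qed.

Lemma tr_lam_eq u : tr_term (Lam u) = PIn n_c (PPar (PVar 0) (PPar (POut n_b Restart) (HW u))).
Proof. reflexivity. Qed.

Lemma choice_subst2 X : subst_at 2 X (Choice (PVar 1)) = Choice (PVar 1).
Proof. apply (subst_closed _ 2); [simpl; repeat split; lia|lia]. Qed.
Lemma choice_subst1 t : wf_at 0 t -> subst_at 1 (tr_term t) (Choice (PVar 1)) = psum (EP (tr_term t)) SP.
Proof. intros W. unfold Choice, psum; cbn. rewrite !tr_term_shift by auto. reflexivity. Qed.
Lemma closed_psum t : wf_at 0 t -> closed_at 0 (psum (EP (tr_term t)) SP).
Proof. intros W. simpl. repeat split; try lia. eapply closed_mono; [apply tr_term_closed; auto|lia]. Qed.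
Lemma LBody_subst u s : wf_at 1 u -> wf_at 0 s -> subst_at 1 (tr_term s) (LBody u) = tr_term (open u s).
Proof. apply tr_body_subst. Qed.
Lemma LBody_subst_num u m : wf_at 1 u -> subst_at 1 (num m) (LBody u) = tr_term (open u (FVar m)).
Proof. intros W. change (num m) with (tr_term (FVar m)). apply tr_body_subst; simpl; auto. Qed.

Lemma shift_c P d : closed_at 0 P -> shift_from d P = P.
Proof. intros; eapply shift_closed; eauto; lia. Qed.

Ltac closed_simpl :=
  repeat first
  [ rewrite (shift_c (EP _)) by (apply closed_EP; assumption)
  | rewrite (shift_c SP) by apply closed_SP
  | rewrite (shift_c Rec) by apply closed_Rec
  | rewrite (shift_c Restart) by apply Restart_closed
  | rewrite (shift_c done0) by apply closed_done0
  | rewrite choice_subst2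
  | rewrite choice_subst1 by assumption
  | rewrite (subst_c (psum _ _)) by (apply closed_psum; assumption)
  | rewrite LBody_subst by assumption
  | rewrite LBody_subst_num by assumption
  | rewrite (subst_c Rec) by apply closed_Rec
  | rewrite (subst_c RB) by apply closed_RB
  | rewrite (subst_c RecB) by apply closed_RecB
  | rewrite (subst_c Cont) by apply closed_Cont
  | rewrite (subst_c HWc) by apply closed_HWc
  | rewrite (subst_c done0) by apply closed_done0
  | rewrite (subst_c SP) by apply closed_SP
  | rewrite (subst_c CH) by apply closed_CH
  | rewrite (subst_c stack_nil) by apply closed_stack_nil
  | rewrite (subst_c (HW _)) by (apply closed_HW; assumption)
  | rewrite (subst_c (EP _)) by (apply closed_EP; assumption)
  | rewrite (shiftn_closed Rec) by apply closed_Rec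
  | rewrite (shiftn_closed Restart) by apply Restart_closed
  | rewrite (shiftn_closed (EP _)) by (apply closed_EP; assumption)
  | rewrite (shiftn_closed stack_nil) by apply closed_stack_nil
  | rewrite (shiftn_closed done0) by apply closed_done0
  | rewrite (shiftn_closed SP) by apply closed_SP
  | rewrite num_shiftn | rewrite num_shift | rewrite tr_term_shift by assumption
  | rewrite tr_term_shiftn by assumption
  | rewrite tr_term_subst by assumption | rewrite num_subst | rewrite stack_subst by assumption
  | rewrite Restart_subst ].

Lemma fl_Rec : flatten Rec = [Rec]. Proof. reflexivity. Qed.
Lemma fl_Restart : flatten Restart = [Restart]. Proof. reflexivity. Qed.
Lemma fl_Cont : flatten Cont = [Cont]. Proof. reflexivity. Qed.
Lemma fl_done0 : flatten done0 = [done0]. Proof. reflexivity. Qed.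
Lemma fl_stack_nil : flatten stack_nil = [stack_nil]. Proof. reflexivity. Qed.
Lemma fl_HW u : flatten (HW u) = [HW u]. Proof. reflexivity. Qed.
Lemma fl_EP T : flatten (EP T) = [EP T]. Proof. reflexivity. Qed.
Lemma fl_SP : flatten SP = [SP]. Proof. reflexivity. Qed.
Lemma fl_RB : flatten RB = [RB]. Proof. reflexivity. Qed.
Lemma fl_RecB : flatten RecB = [RecB]. Proof. reflexivity. Qed.
Lemma fl_HWc : flatten HWc = [HWc]. Proof. reflexivity. Qed.
Lemma fl_CH : flatten CH = [CH]. Proof. reflexivity. Qed.
Lemma fl_psum A B : flatten (psum A B) = [POut n_ch A; POut n_ch B; CH]. Proof. reflexivity. Qed.
Lemma fl_num f : flatten (num f) = [num f]. Proof. destruct f; reflexivity. Qed.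

Ltac fl_simpl := repeat first [ rewrite fl_Rec | rewrite fl_Restart | rewrite fl_Cont | rewrite fl_done0
  | rewrite fl_stack_nil | rewrite fl_HW | rewrite fl_EP | rewrite fl_SP | rewrite fl_RB | rewrite fl_RecB
  | rewrite fl_num | rewrite fl_psum | rewrite fl_HWc | rewrite fl_CH | rewrite tr_term_flatten by assumption ].


Ltac norm_atoms :=
  fold done0 in *; fold HWc in *; fold RecB in *; fold RB in *; fold SP in *; fold CH in *;
  fold stack_nil in *;
  try change (PIn n_lambda RB) with Restart in *;
  try change (PIn n_init RecB) with Rec in *;
  try change (PIn n_c (PPar (PVar 0) (PPar (POut n_b done0) HWc))) with Cont in *;
  repeat (change (PIn n_hd (PIn n_b (LBody ?x))) with (HW x) in * );
  repeat (change (PIn n_enter (PIn n_c (PPar ?x (POut n_c stack_nil)))) with (EP x) in * ).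

Ltac comp_res :=
  unfold_all_states; cbn [tr_term tr tr_stack num] in *;
  unfold psubst; cbn [subst_at flatten shiftn app Nat.compare tr_stack num];
  closed_simpl; cbn [subst_at flatten shiftn app Nat.compare tr_stack num]; fl_simpl;
  cbn [subst_at flatten shiftn app Nat.compare tr_stack num];
  norm_atoms.

Ltac fin := right; (split; [reflexivity|]); comp_res; perm.
Ltac fin_in := right; eexists; (split; [reflexivity|]); comp_res; perm.


Lemma stau_intro M a X B r T : Permutation M (POut a X :: PIn a B :: r) ->
  Permutation (r ++ flatten (psubst B X)) T -> stau M T.
Proof. intros H1 H2. exists (r ++ flatten (psubst B X)); split; auto. apply (ss_tau _ a X B r); auto. Qed.

Lemma sin_intro M a B r X T : Permutation M (PIn a B :: r) ->
  Permutation (r ++ flatten (psubst B X)) T -> exists N2, sstep M (LIn a X) N2 /\ Permutation N2 T.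
Proof. intros H1 H2. exists (r ++ flatten (psubst B X)); split; auto. constructor; auto. Qed.

Ltac fin2 := comp_res; perm.

Ltac ex_tau a X B r :=
  apply (stau_intro _ a X B r); [unfold_all_states; cbn [tr_term tr tr_stack num]; norm_atoms; perm|].

Ltac ex_in a B r :=
  apply (sin_intro _ a B r); [unfold_all_states; cbn [tr_term tr tr_stack num]; norm_atoms; perm|].

Lemma inv_app t1 t2 pi m l S : wf_at 0 t1 -> wf_at 0 t2 -> wfs pi ->
  sstep (Ev (App t1 t2) pi m) l S -> Hlab l \/ (l = LTau /\ Permutation S (Ev t1 (t2 :: pi) m)).
Proof.
  intros W1 W2 W3 H. inv_tac l H.
  rewrite (tr_wf0 t1), (tr_wf0 t2) by auto. fin.
Qed.

Lemma ex_app t1 t2 pi m : wf_at 0 t1 -> wf_at 0 t2 -> wfs pi ->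
  stau (Ev (App t1 t2) pi m) (Ev t1 (t2 :: pi) m).
Proof.
  intros W1 W2 W3.
  ex_tau n_c (tr_stack pi) (PPar (tr (fun i => S i) t1)
               (POut n_c (PPar (POut n_hd (tr (fun i => S i) t2)) (POut n_c (PVar 0)))))
         (Eb m).
  unfold_all_states. rewrite (tr_wf0 t1), (tr_wf0 t2) by auto. fin2.
Qed.

Lemma inv_lam_cons u s p m l S : wf_at 1 u -> wf_at 0 s -> wfs p ->
  sstep (Ev (Lam u) (s :: p) m) l S -> Hlab l \/ (l = LTau /\ Permutation S (LA1 u s p m)).
Proof.
  intros W1 W2 W3 H. unfold Ev in H; rewrite tr_lam_eq in H. inv_tac l H. fin.
Qed.

Lemma ex_lam_cons u s p m : wf_at 1 u -> wf_at 0 s -> wfs p ->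
  stau (Ev (Lam u) (s :: p) m) (LA1 u s p m).
Proof.
  intros W1 W2 W3. unfold Ev; rewrite tr_lam_eq.
  ex_tau n_c (tr_stack (s :: p)) (PPar (PVar 0) (PPar (POut n_b Restart) (HW u))) (Eb m).
  unfold_all_states. fin2.
Qed.

Lemma inv_la1 u s p m l S : wf_at 1 u -> wf_at 0 s -> wfs p ->
  sstep (LA1 u s p m) l S -> Hlab l \/ (l = LTau /\ Permutation S (LA2 u s p m)).
Proof. intros W1 W2 W3 H. inv_tac l H. fin. Qed.

Lemma ex_la1 u s p m : wf_at 1 u -> wf_at 0 s -> wfs p -> stau (LA1 u s p m) (LA2 u s p m).
Proof.
  intros W1 W2 W3.
  ex_tau n_hd (tr_term s) (PIn n_b (LBody u)) (POut n_c (tr_stack p) :: POut n_b Restart :: Eb m).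
  fin2.
Qed.

Lemma inv_la2 u s p m l S : wf_at 1 u -> wf_at 0 s -> wfs p ->
  sstep (LA2 u s p m) l S -> Hlab l \/ (l = LTau /\ Permutation S (Ev (open u s) p m)).
Proof.
  intros W1 W2 W3 H. assert (W4 : wf_at 0 (open u s)) by (apply wf_open; auto).
  inv_tac l H. fin.
Qed.

Lemma ex_la2 u s p m : wf_at 1 u -> wf_at 0 s -> wfs p -> stau (LA2 u s p m) (Ev (open u s) p m).
Proof.
  intros W1 W2 W3. assert (W4 : wf_at 0 (open u s)) by (apply wf_open; auto).
  ex_tau n_b Restart (tr_term (open u s)) (POut n_c (tr_stack p) :: Eb m).
  fin2.
Qed.

Lemma inv_lam_nil u m l S : wf_at 1 u ->
  sstep (Ev (Lam u) [] m) l S -> Hlab l \/ (l = LTau /\ Permutation S (LB1 u m)).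
Proof.
  intros W1 H. unfold Ev in H; rewrite tr_lam_eq in H. inv_tac l H. fin.
Qed.

Lemma ex_lam_nil u m : wf_at 1 u -> stau (Ev (Lam u) [] m) (LB1 u m).
Proof.
  intros W1. unfold Ev; rewrite tr_lam_eq.
  ex_tau n_c (tr_stack []) (PPar (PVar 0) (PPar (POut n_b Restart) (HW u))) (Eb m).
  fin2.
Qed.

Lemma inv_lb1 u m l S : wf_at 1 u ->
  sstep (LB1 u m) l S -> Hlab l \/ (l = LTau /\ Permutation S (LB2 u m)).
Proof. intros W1 H. inv_tac l H. fin. Qed.

Lemma ex_lb1 u m : wf_at 1 u -> stau (LB1 u m) (LB2 u m).
Proof.
  intros W1. ex_tau n_b Restart (PVar 0) (HW u :: Eb m). fin2.
Qed.

Lemma inv_lb2 u m l S : wf_at 1 u ->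
  sstep (LB2 u m) l S -> Hlab l \/ (exists Q, l = LIn n_lambda Q /\ Permutation S (LB3 u m)).
Proof. intros W1 H. inv_tac l H. fin_in. Qed.

Lemma ex_lb2 u m X : wf_at 1 u ->
  exists N2, sstep (LB2 u m) (LIn n_lambda X) N2 /\ Permutation N2 (LB3 u m).
Proof. intros W1. ex_in n_lambda RB (HW u :: Eb m). fin2. Qed.

Lemma inv_lb3 u m l S : wf_at 1 u ->
  sstep (LB3 u m) l S -> Hlab l \/ (l = LTau /\ Permutation S (LB4 u m)).
Proof. intros W1 H. inv_tac l H. fin. Qed.

Lemma ex_lb3 u m : wf_at 1 u -> stau (LB3 u m) (LB4 u m).
Proof.
  intros W1. ex_tau n_k (num m)
   (PPar (POut n_hd (PVar 0)) (PPar (POut n_k (PIn n_suc (PVar 1))) (PPar (POut n_c stack_nil) (POut n_b PNil))))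
   [HW u; Rec; POut n_rec Rec]. fin2.
Qed.

Lemma inv_lb4 u m l S : wf_at 1 u ->
  sstep (LB4 u m) l S -> Hlab l \/ (l = LTau /\ Permutation S (LB5 u m)).
Proof. intros W1 H. inv_tac l H. fin. Qed.

Lemma ex_lb4 u m : wf_at 1 u -> stau (LB4 u m) (LB5 u m).
Proof.
  intros W1. ex_tau n_hd (num m) (PIn n_b (LBody u))
   [POut n_k (num (S m)); POut n_c (tr_stack []); POut n_b PNil; Rec; POut n_rec Rec]. fin2.
Qed.

Lemma inv_lb5 u m l Z : wf_at 1 u ->
  sstep (LB5 u m) l Z -> Hlab l \/ (l = LTau /\ Permutation Z (Ev (open u (FVar m)) [] (S m))).
Proof.
  intros W1 H. assert (W4 : wf_at 0 (open u (FVar m))) by (apply wf_open; simpl; auto).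
  inv_tac l H. fin.
Qed.

Lemma ex_lb5 u m : wf_at 1 u -> stau (LB5 u m) (Ev (open u (FVar m)) [] (S m)).
Proof.
  intros W1. assert (W4 : wf_at 0 (open u (FVar m))) by (apply wf_open; simpl; auto).
  ex_tau n_b PNil (tr_term (open u (FVar m)))
   [POut n_k (num (S m)); POut n_c (tr_stack []); Rec; POut n_rec Rec]. fin2.
Qed.

Lemma inv_fvar f pi m l Z : wfs pi ->
  sstep (Ev (FVar f) pi m) l Z ->
  Hlab l \/
  (exists Q f', f = S f' /\ l = LIn n_suc Q /\ Permutation Z (Ev (FVar f') pi m)) \/
  (exists Q, f = 0 /\ l = LIn n_z Q /\ Permutation Z (K0 pi m)).
Proof.
  intros W H. destruct f as [|f].
  - inv_tac l H. right; right; eexists; (split; [reflexivity|]); (split; [reflexivity|]); comp_res; perm.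
  - inv_tac l H. right; left; do 2 eexists; (split; [reflexivity|]); (split; [reflexivity|]); comp_res; perm.
Qed.

Lemma ex_suc f pi m X : wfs pi ->
  exists N2, sstep (Ev (FVar (S f)) pi m) (LIn n_suc X) N2 /\ Permutation N2 (Ev (FVar f) pi m).
Proof. intros W. ex_in n_suc (num f) (POut n_c (tr_stack pi) :: Eb m). fin2. Qed.

Lemma ex_z pi m X : wfs pi ->
  exists N2, sstep (Ev (FVar 0) pi m) (LIn n_z X) N2 /\ Permutation N2 (K0 pi m).
Proof. intros W. ex_in n_z (POut n_init PNil) (POut n_c (tr_stack pi) :: Eb m). fin2. Qed.

Lemma inv_k0 pi m l S : wfs pi ->
  sstep (K0 pi m) l S -> Hlab l \/ (l = LTau /\ Permutation S (K1 pi m)).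
Proof. intros W H. inv_tac l H. fin. Qed.

Lemma ex_k0 pi m : wfs pi -> stau (K0 pi m) (K1 pi m).
Proof.
  intros W. ex_tau n_init PNil RecB [POut n_c (tr_stack pi); POut n_k (num m); POut n_rec Rec]. fin2.
Qed.

Lemma inv_k1 pi m l S : wfs pi ->
  sstep (K1 pi m) l S -> Hlab l \/ (l = LTau /\ Permutation S (K2 pi m)).
Proof. intros W H. inv_tac l H. fin. Qed.

Lemma ex_k1 pi m : wfs pi -> stau (K1 pi m) (K2 pi m).
Proof.
  intros W. ex_tau n_rec Rec (PPar (PVar 0) (PPar (POut n_rec (PVar 0)) Cont))
    [POut n_c (tr_stack pi); POut n_k (num m)]. fin2.
Qed.

Lemma inv_k2 pi m l Z : wfs pi ->
  sstep (K2 pi m) l Z -> Hlab l \/ (l = LTau /\ Permutation Z (K3 pi m)).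
Proof.
  intros W H. destruct pi as [|t p].
  - inv_tac l H. fin.
  - inversion W; subst. inv_tac l H. fin.
Qed.

Lemma ex_k2 pi m : wfs pi -> stau (K2 pi m) (K3 pi m).
Proof.
  intros W. ex_tau n_c (tr_stack pi) (PPar (PVar 0) (PPar (POut n_b done0) HWc)) (Eb m).
  destruct pi as [|t p].
  - fin2.
  - inversion W; subst. fin2.
Qed.

Lemma inv_k3nil m l Z :
  sstep (K3 [] m) l Z -> Hlab l \/ (l = LTau /\ Permutation Z (Dn m)).
Proof. intros H. inv_tac l H. fin. Qed.

Lemma ex_k3nil m : stau (K3 [] m) (Dn m).
Proof. ex_tau n_b done0 (PVar 0) (HWc :: Eb m). fin2. Qed.

Lemma inv_dn m l Z :
  sstep (Dn m) l Z -> Hlab l \/ (exists Q, l = LIn n_done Q /\ Permutation Z (In_ m)).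
Proof. intros H. inv_tac l H. fin_in. Qed.

Lemma ex_dn m X : exists N2, sstep (Dn m) (LIn n_done X) N2 /\ Permutation N2 (In_ m).
Proof. ex_in n_done PNil (HWc :: Eb m). fin2. Qed.

Lemma inv_in m l Z : sstep (In_ m) l Z -> Hlab l.
Proof. intros H. cut (Hlab l \/ False); [tauto|]. inv_tac l H. Qed.

Lemma inv_k3cons t p m l Z : wf_at 0 t -> wfs p ->
  sstep (K3 (t :: p) m) l Z -> Hlab l \/ (l = LTau /\ Permutation Z (K4 t p m)).
Proof. intros W1 W2 H. inv_tac l H. fin. Qed.

Lemma ex_k3cons t p m : wf_at 0 t -> wfs p -> stau (K3 (t :: p) m) (K4 t p m).
Proof.
  intros W1 W2. ex_tau n_hd (tr_term t) (PIn n_b (Choice (PVar 1)))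
    (POut n_c (tr_stack p) :: POut n_b done0 :: Eb m). fin2.
Qed.

Lemma inv_k4 t p m l Z : wf_at 0 t -> wfs p ->
  sstep (K4 t p m) l Z -> Hlab l \/ (l = LTau /\ Permutation Z (K5 t p m)).
Proof. intros W1 W2 H. inv_tac l H. fin. Qed.

Lemma ex_k4 t p m : wf_at 0 t -> wfs p -> stau (K4 t p m) (K5 t p m).
Proof.
  intros W1 W2. ex_tau n_b done0 (psum (EP (tr_term t)) SP) (POut n_c (tr_stack p) :: Eb m). fin2.
Qed.

Lemma inv_k5 t p m l Z : wf_at 0 t -> wfs p ->
  sstep (K5 t p m) l Z -> Hlab l \/ (l = LTau /\ Permutation Z (K6e t p m)) \/
     (l = LTau /\ Permutation Z (K6s t p m)).
Proof.
  intros W1 W2 H. inv_tac l H.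
  - right; left; (split; [reflexivity|]); comp_res; perm.
  - right; right; (split; [reflexivity|]); comp_res; perm.
Qed.

Lemma ex_k5e t p m : wf_at 0 t -> wfs p -> stau (K5 t p m) (K6e t p m).
Proof.
  intros W1 W2. ex_tau n_ch (EP (tr_term t)) (PIn n_ch (PVar 1))
    (POut n_ch SP :: POut n_c (tr_stack p) :: Eb m). fin2.
Qed.

Lemma ex_k5s t p m : wf_at 0 t -> wfs p -> stau (K5 t p m) (K6s t p m).
Proof.
  intros W1 W2. ex_tau n_ch SP (PIn n_ch (PVar 1))
    (POut n_ch (EP (tr_term t)) :: POut n_c (tr_stack p) :: Eb m). fin2.
Qed.

Lemma inv_k6e t p m l Z : wf_at 0 t -> wfs p ->
  sstep (K6e t p m) l Z -> Hlab l \/ (l = LTau /\ Permutation Z (We t p m)).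
Proof. intros W1 W2 H. inv_tac l H. fin. Qed.

Lemma ex_k6e t p m : wf_at 0 t -> wfs p -> stau (K6e t p m) (We t p m).
Proof.
  intros W1 W2. ex_tau n_ch SP (EP (tr_term t)) (POut n_c (tr_stack p) :: Eb m). fin2.
Qed.

Lemma inv_k6s t p m l Z : wf_at 0 t -> wfs p ->
  sstep (K6s t p m) l Z -> Hlab l \/ (l = LTau /\ Permutation Z (Ws p m)).
Proof. intros W1 W2 H. inv_tac l H. fin. Qed.

Lemma ex_k6s t p m : wf_at 0 t -> wfs p -> stau (K6s t p m) (Ws p m).
Proof.
  intros W1 W2. ex_tau n_ch (EP (tr_term t)) SP (POut n_c (tr_stack p) :: Eb m). fin2.
Qed.

Lemma inv_we t p m l Z : wf_at 0 t -> wfs p ->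
  sstep (We t p m) l Z -> Hlab l \/ (exists Q, l = LIn n_enter Q /\ Permutation Z (We' t p m)).
Proof. intros W1 W2 H. inv_tac l H. fin_in. Qed.

Lemma ex_we t p m X : wf_at 0 t -> wfs p ->
  exists N2, sstep (We t p m) (LIn n_enter X) N2 /\ Permutation N2 (We' t p m).
Proof.
  intros W1 W2. ex_in n_enter (PIn n_c (PPar (tr_term t) (POut n_c stack_nil)))
    (POut n_c (tr_stack p) :: Eb m). fin2.
Qed.

Lemma inv_we' t p m l Z : wf_at 0 t -> wfs p ->
  sstep (We' t p m) l Z -> Hlab l \/ (l = LTau /\ Permutation Z (Ev t [] m)).
Proof. intros W1 W2 H. inv_tac l H. fin. Qed.

Lemma ex_we' t p m : wf_at 0 t -> wfs p -> stau (We' t p m) (Ev t [] m).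
Proof.
  intros W1 W2. ex_tau n_c (tr_stack p) (PPar (tr_term t) (POut n_c stack_nil)) (Eb m). fin2.
Qed.

Lemma inv_ws p m l Z : wfs p ->
  sstep (Ws p m) l Z -> Hlab l \/ (exists Q, l = LIn n_skip Q /\ Permutation Z (K0 p m)).
Proof. intros W2 H. inv_tac l H. fin_in. Qed.

Lemma ex_ws p m X : wfs p ->
  exists N2, sstep (Ws p m) (LIn n_skip X) N2 /\ Permutation N2 (K0 p m).
Proof. intros W2. ex_in n_skip (POut n_init PNil) (POut n_c (tr_stack p) :: Eb m). fin2. Qed.

From Stdlib Require Import List Arith Relations Permutation Lia.
Import ListNotations.

Ltac hn := simpl; unfold H_names, n_c, n_hd, n_b, n_k, n_init, n_rec, n_ch; simpl; intuition.

Lemma nvo_Rec : nvo Rec. Proof. hn. Qed.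
Lemma nvo_Restart : nvo Restart. Proof. hn. Qed.
Lemma nvo_Cont : nvo Cont. Proof. hn. Qed.
Lemma nvo_num f : nvo (num f). Proof. induction f; hn. Qed.
Lemma nvo_tr t : forall rho, nvo (tr rho t).
Proof.
  induction t; intros rho; cbn [tr nvo]; repeat split;
   first [apply IHt | apply IHt1 | apply IHt2 | apply nvo_num | apply nvo_Restart | hn].
Qed.
Lemma nvo_trt t : nvo (tr_term t). Proof. apply nvo_tr. Qed.
Lemma nvo_stack pi : nvo (tr_stack pi).
Proof. induction pi; cbn [tr_stack nvo]; repeat split; first [apply IHpi | apply nvo_trt | hn]. Qed.
Lemma nvo_LBody u : nvo (LBody u). Proof. apply nvo_tr. Qed.

Lemma nvo_HW u : nvo (HW u). Proof. unfold HW; cbn [nvo]. apply nvo_LBody. Qed.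
Lemma nvo_RB : nvo RB. Proof. hn. Qed.
Lemma nvo_RecB : nvo RecB. Proof. unfold RecB; cbn [nvo]; repeat split; try apply nvo_Cont; hn. Qed.
Lemma nvo_HWc : nvo HWc. Proof. hn. Qed.
Lemma nvo_done0 : nvo done0. Proof. hn. Qed.
Lemma nvo_EP t : nvo (EP (tr_term t)). Proof. unfold EP; cbn [nvo]; repeat split; try apply nvo_trt; hn. Qed.
Lemma nvo_SP : nvo SP. Proof. hn. Qed.
Lemma nvo_CH : nvo CH. Proof. hn. Qed.
Lemma nvo_stack_nil : nvo stack_nil. Proof. hn. Qed.
Lemma nvo_psum t : nvo (psum (EP (tr_term t)) SP).
Proof. unfold psum; cbn [nvo]; repeat split; try apply nvo_EP; try apply nvo_SP; hn. Qed.

Ltac nv_tac :=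
  unfold NV; unfold_all_states;
  repeat (apply Forall_cons || apply Forall_nil);
  cbn [nvo]; repeat split;
  first [ apply nvo_Rec | apply nvo_Restart | apply nvo_Cont | apply nvo_num | apply nvo_trt
        | apply nvo_stack | apply nvo_LBody | apply nvo_HW | apply nvo_RB | apply nvo_RecB
        | apply nvo_HWc | apply nvo_done0 | apply nvo_EP | apply nvo_SP | apply nvo_CH
        | apply nvo_stack_nil | apply nvo_psum | hn ].

Lemma NV_Ev t pi m : NV (Ev t pi m). Proof. nv_tac. Qed.
Lemma NV_LA1 u s p m : NV (LA1 u s p m). Proof. nv_tac. Qed.
Lemma NV_LA2 u s p m : NV (LA2 u s p m). Proof. nv_tac. Qed.
Lemma NV_LB1 u m : NV (LB1 u m). Proof. nv_tac. Qed.
Lemma NV_LB2 u m : NV (LB2 u m). Proof. nv_tac. Qed.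
Lemma NV_LB3 u m : NV (LB3 u m). Proof. nv_tac. Qed.
Lemma NV_LB4 u m : NV (LB4 u m). Proof. nv_tac. Qed.
Lemma NV_LB5 u m : NV (LB5 u m). Proof. nv_tac. Qed.
Lemma NV_K0 p m : NV (K0 p m). Proof. nv_tac. Qed.
Lemma NV_K1 p m : NV (K1 p m). Proof. nv_tac. Qed.
Lemma NV_K2 p m : NV (K2 p m). Proof. nv_tac. Qed.
Lemma NV_K3 p m : NV (K3 p m). Proof. destruct p; nv_tac. Qed.
Lemma NV_Dn m : NV (Dn m). Proof. nv_tac. Qed.
Lemma NV_In m : NV (In_ m). Proof. nv_tac. Qed.
Lemma NV_K4 t p m : NV (K4 t p m). Proof. nv_tac. Qed.
Lemma NV_K5 t p m : NV (K5 t p m). Proof. nv_tac. Qed.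
Lemma NV_K6e t p m : NV (K6e t p m). Proof. nv_tac. Qed.
Lemma NV_K6s t p m : NV (K6s t p m). Proof. nv_tac. Qed.
Lemma NV_We t p m : NV (We t p m). Proof. nv_tac. Qed.
Lemma NV_Ws p m : NV (Ws p m). Proof. nv_tac. Qed.
Lemma NV_We' t p m : NV (We' t p m). Proof. nv_tac. Qed.


Definition Cl (t : term) (m : nat) (M : list proc) : Prop :=
  (exists t1 pi1, kam_star (t, []) (t1, pi1) /\
     (Permutation M (Ev t1 pi1 m) \/
      (exists u s p, t1 = Lam u /\ pi1 = s :: p /\
          (Permutation M (LA1 u s p m) \/ Permutation M (LA2 u s p m))) \/
      (exists u, t1 = Lam u /\ pi1 = [] /\ (Permutation M (LB1 u m) \/ Permutation M (LB2 u m)))))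
  \/ (exists u m0, m = S m0 /\ t = open u (FVar m0) /\ wf_at 1 u /\
        (Permutation M (LB3 u m0) \/ Permutation M (LB4 u m0) \/ Permutation M (LB5 u m0)))
  \/ (exists p, wfs p /\ Permutation M (We' t p m)).

Lemma Cl_perm t m M M' : Permutation M M' -> Cl t m M -> Cl t m M'.
Proof.
  intros HP H. unfold Cl in *.
  assert (forall X, Permutation M X -> Permutation M' X) as HX
    by (intros; eapply Permutation_trans; [apply Permutation_sym, HP|auto]).
  destruct H as [[t1 [pi1 [Hk H]]]|[[u [m0 H]]|[p H]]].
  - left; exists t1, pi1; split; auto.
    destruct H as [H|[[u [s [p [E1 [E2 [H|H]]]]]]|[u [E1 [E2 [H|H]]]]]]; eauto 10.
  - right; left; exists u, m0; intuition.
  - right; right; exists p; intuition.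
Qed.

Lemma NV_Cl t m M : Cl t m M -> NV M.
Proof.
  intros H. destruct H as [[t1 [pi1 [Hk H]]]|[[u [m0 H]]|[p H]]].
  - destruct H as [H|[[u [s [p [E1 [E2 [H|H]]]]]]|[u [E1 [E2 [H|H]]]]]];
      eapply NV_perm; try (apply Permutation_sym; exact H);
      auto using NV_Ev, NV_LA1, NV_LA2, NV_LB1, NV_LB2.
  - destruct H as [_ [_ [_ [H|[H|H]]]]];
      eapply NV_perm; try (apply Permutation_sym; exact H); auto using NV_LB3, NV_LB4, NV_LB5.
  - destruct H as [_ H]. eapply NV_perm; [apply Permutation_sym; exact H|]. apply NV_We'.
Qed.

Lemma sstep_perm_l M X l Z : Permutation M X -> sstep M l Z -> sstep X l Z.
Proof. intros; eapply sstep_perm; eauto. Qed.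

Lemma kam_wf0 t t1 pi1 : wf_at 0 t -> kam_star (t, []) (t1, pi1) -> wf_at 0 t1 /\ wfs pi1.
Proof. intros W H. apply kam_star_wf in H; [exact H|split; simpl; auto; constructor]. Qed.

Lemma kam_star_snoc c c1 c2 : kam_star c c1 -> kam_step c1 c2 -> kam_star c c2.
Proof. intros; eapply rt_trans; eauto; apply rt_step; auto. Qed.

Lemma cl_tau t m M Z : wf_at 0 t -> Cl t m M -> sstep M LTau Z -> Cl t m Z.
Proof.
  intros W H Hs. destruct H as [[t1 [pi1 [Hk H]]]|[[u [m0 H]]|[p H]]].
  - destruct (kam_wf0 _ _ _ W Hk) as [W1 W2].
    destruct H as [H|[[u [s [p [E1 [E2 [H|H]]]]]]|[u [E1 [E2 [H|H]]]]]];
      apply (sstep_perm_l _ _ _ _ H) in Hs.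
    + destruct t1 as [f|i|u|t1 t2].
      * apply inv_fvar in Hs as [[]|[[Q [f' [_ [E _]]]]|[Q [_ [E _]]]]]; auto; discriminate.
      * simpl in W1; lia.
      * destruct pi1 as [|s p].
        -- apply inv_lam_nil in Hs as [[]|[_ HP]]; auto.
           left. exists (Lam u), []. split; auto. right; right. eauto.
        -- inversion W2; subst. apply inv_lam_cons in Hs as [[]|[_ HP]]; auto.
           left. exists (Lam u), (s :: p). split; auto. right; left. eauto 7.
      * destruct W1. apply inv_app in Hs as [[]|[_ HP]]; auto.
        left. exists t1, (t2 :: pi1). split; [eapply kam_star_snoc; eauto; constructor|]. left; auto.
    + subst. inversion W2; subst. apply inv_la1 in Hs as [[]|[_ HP]]; auto.
      left. exists (Lam u), (s :: p). split; auto. right; left. eauto 7.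
    + subst. inversion W2; subst. apply inv_la2 in Hs as [[]|[_ HP]]; auto.
      left. exists (open u s), p. split; [eapply kam_star_snoc; eauto; constructor|]. left; auto.
    + subst. apply inv_lb1 in Hs as [[]|[_ HP]]; auto.
      left. exists (Lam u), []. split; auto. right; right. eauto.
    + subst. apply inv_lb2 in Hs as [[]|[Q [E _]]]; auto. discriminate.
  - destruct H as [E1 [E2 [W1 [H|[H|H]]]]]; apply (sstep_perm_l _ _ _ _ H) in Hs.
    + apply inv_lb3 in Hs as [[]|[_ HP]]; auto. right; left. exists u, m0. intuition.
    + apply inv_lb4 in Hs as [[]|[_ HP]]; auto. right; left. exists u, m0. intuition.
    + apply inv_lb5 in Hs as [[]|[_ HP]]; auto. subst.
      left. exists (open u (FVar m0)), []. split; [apply rt_refl|]. left; auto.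
  - destruct H as [W2 H]. apply (sstep_perm_l _ _ _ _ H) in Hs.
    apply inv_we' in Hs as [[]|[_ HP]]; auto.
    left. exists t, []. split; [apply rt_refl|]. left; auto.
Qed.

Ltac kill_in Ha :=
  match goal with
  | H : Hlab (LIn _ _) |- _ => exfalso; apply Ha; exact H
  | H : LIn _ _ = LTau |- _ => discriminate H
  end.

Lemma cl_in t m M a X Z : wf_at 0 t -> Cl t m M -> ~ In a H_names -> sstep M (LIn a X) Z ->
  (a = n_lambda /\ exists u, kam_star (t, []) (Lam u, []) /\ Permutation M (LB2 u m) /\
      Permutation Z (LB3 u m)) \/
  (exists f pi, kam_star (t, []) (FVar f, pi) /\ Permutation M (Ev (FVar f) pi m) /\
     ((exists f', f = S f' /\ a = n_suc /\ Permutation Z (Ev (FVar f') pi m)) \/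
      (f = 0 /\ a = n_z /\ Permutation Z (K0 pi m)))).
Proof.
  intros W H Ha Hs. destruct H as [[t1 [pi1 [Hk H]]]|[[u [m0 H]]|[p H]]].
  - destruct (kam_wf0 _ _ _ W Hk) as [W1 W2].
    destruct H as [H|[[u [s [p [E1 [E2 [H|H]]]]]]|[u [E1 [E2 [H|H]]]]]];
      pose proof (sstep_perm_l _ _ _ _ H Hs) as Hs'.
    + destruct t1 as [f|i|u|t1 t2].
      * apply inv_fvar in Hs' as [Hl|[[Q [f' [E1 [E2 HP]]]]|[Q [E1 [E2 HP]]]]]; auto.
        -- kill_in Ha.
        -- injection E2 as <- _. right. exists f, pi1. repeat split; auto. left; eauto.
        -- injection E2 as <- _. right. exists f, pi1. repeat split; auto.
      * simpl in W1; lia.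
      * destruct pi1 as [|s p].
        -- apply inv_lam_nil in Hs' as [Hl|[E _]]; first [kill_in Ha | auto].
        -- inversion W2; subst. apply inv_lam_cons in Hs' as [Hl|[E _]]; first [kill_in Ha | auto].
      * destruct W1. apply inv_app in Hs' as [Hl|[E _]]; first [kill_in Ha | auto].
    + subst. inversion W2; subst. apply inv_la1 in Hs' as [Hl|[E _]]; first [kill_in Ha | auto].
    + subst. inversion W2; subst. apply inv_la2 in Hs' as [Hl|[E _]]; first [kill_in Ha | auto].
    + subst. apply inv_lb1 in Hs' as [Hl|[E _]]; first [kill_in Ha | auto].
    + subst. apply inv_lb2 in Hs' as [Hl|[Q [E HP]]]; [kill_in Ha| |auto].
      injection E as <- _. left. split; auto. exists u. auto.
  - destruct H as [E1 [E2 [W1 [H|[H|H]]]]]; pose proof (sstep_perm_l _ _ _ _ H Hs) as Hs'.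
    + apply inv_lb3 in Hs' as [Hl|[E _]]; first [kill_in Ha | auto].
    + apply inv_lb4 in Hs' as [Hl|[E _]]; first [kill_in Ha | auto].
    + apply inv_lb5 in Hs' as [Hl|[E _]]; first [kill_in Ha | auto].
  - destruct H as [W2 H]. pose proof (sstep_perm_l _ _ _ _ H Hs) as Hs'.
    apply inv_we' in Hs' as [Hl|[E _]]; first [kill_in Ha | auto].
Qed.

Lemma stau_l M X Y : Permutation M X -> stau X Y -> stau M Y.
Proof. intros HP H. eapply stau_perm; [apply Permutation_sym; exact HP|exact H]. Qed.

Lemma sim_step t1 pi1 t2 pi2 m : wf_at 0 t1 -> wfs pi1 -> kam_step (t1, pi1) (t2, pi2) ->
  sstar (Ev t1 pi1 m) (Ev t2 pi2 m).
Proof.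
  intros W1 W2 H. inversion H; subst.
  - destruct W1. apply sstar_step, ex_app; auto.
  - inversion W2; subst. simpl in W1.
    eapply sstar_trans; [apply sstar_step, ex_lam_cons; auto|].
    eapply sstar_trans; [apply sstar_step, ex_la1; auto|].
    apply sstar_step, ex_la2; auto.
Qed.

Lemma sim_star c1 c2 m : kam_star c1 c2 -> wfc c1 -> sstar (Ev (fst c1) (snd c1) m) (Ev (fst c2) (snd c2) m).
Proof.
  intros H. apply clos_rt_rt1n in H. induction H; intros Hw.
  - apply sstar_refl.
  - destruct x as [t1 pi1], y as [t2 pi2]. destruct Hw as [W1 W2].
    eapply sstar_trans; [apply sim_step; eauto|].
    apply IHclos_refl_trans_1n. apply (kam_wf _ _ H); split; auto.
Qed.

Lemma sstar_perm_l M X Y : Permutation M X -> sstar X Y -> exists Y', sstar M Y' /\ Permutation Y' Y.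
Proof.
  intros HP H. destruct (sstar_perm X M Y (Permutation_sym HP) H) as [Y' [H1 H2]].
  exists Y'; split; auto. apply Permutation_sym; auto.
Qed.

Lemma sstar_chain M X Y : sstar M X -> sstar X Y -> sstar M Y.
Proof. apply sstar_trans. Qed.

Definition pstar (M Y : list proc) := exists M', sstar M M' /\ Permutation M' Y.

Lemma pstar_refl M Y : Permutation M Y -> pstar M Y.
Proof. intros; exists M; split; auto; apply sstar_refl. Qed.

Lemma pstar_trans M X Y : pstar M X -> pstar X Y -> pstar M Y.
Proof.
  intros [M1 [H1 H2]] [X1 [H3 H4]].
  destruct (sstar_perm_l M1 X X1 H2 H3) as [Y1 [H5 H6]].
  exists Y1; split; [eapply sstar_trans; eauto|eapply Permutation_trans; eauto].
Qed.

Lemma pstar_stau M X Y : Permutation M X -> stau X Y -> pstar M Y.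
Proof. intros HP H. exists Y; split; auto. apply sstar_step. eapply stau_l; eauto. Qed.

Lemma pstar_sstar M X Y : Permutation M X -> sstar X Y -> pstar M Y.
Proof. intros HP H. apply (sstar_perm_l _ _ _ HP) in H as [Y' [H1 H2]]. exists Y'; auto. Qed.

Lemma pstar_stau' X Y : stau X Y -> pstar X Y.
Proof. intros; eapply pstar_stau; eauto. Qed.

Lemma cl_forward t m M : wf_at 0 t -> Cl t m M ->
  (exists t1 pi1, kam_star (t, []) (t1, pi1) /\ pstar M (Ev t1 pi1 m)) \/
  (exists u, kam_star (t, []) (Lam u, []) /\ pstar M (LB2 u m)).
Proof.
  intros W H. destruct H as [[t1 [pi1 [Hk H]]]|[[u [m0 H]]|[p H]]].
  - destruct (kam_wf0 _ _ _ W Hk) as [W1 W2].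
    destruct H as [H|[[u [s [p [E1 [E2 [H|H]]]]]]|[u [E1 [E2 [H|H]]]]]]; subst.
    + left. exists t1, pi1. split; auto. apply pstar_refl; auto.
    + inversion W2; subst. left. exists (open u s), p. split.
      { eapply kam_star_snoc; eauto; constructor. }
      eapply pstar_trans; [eapply pstar_stau; [exact H|apply ex_la1; auto]|].
      apply pstar_stau'; apply ex_la2; auto.
    + inversion W2; subst. left. exists (open u s), p. split.
      { eapply kam_star_snoc; eauto; constructor. }
      eapply pstar_stau; [exact H|apply ex_la2; auto].
    + right. exists u. split; auto. eapply pstar_stau; [exact H|apply ex_lb1; auto].
    + right. exists u. split; auto. apply pstar_refl; auto.
  - destruct H as [E1 [E2 [W1 H]]]; subst. left. exists (open u (FVar m0)), []. split; [apply rt_refl|].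
    assert (H5 : pstar (LB5 u m0) (Ev (open u (FVar m0)) [] (S m0))) by (apply pstar_stau', ex_lb5; auto).
    assert (H4 : pstar (LB4 u m0) (Ev (open u (FVar m0)) [] (S m0)))
      by (eapply pstar_trans; [apply pstar_stau', ex_lb4; auto|auto]).
    assert (H3 : pstar (LB3 u m0) (Ev (open u (FVar m0)) [] (S m0)))
      by (eapply pstar_trans; [apply pstar_stau', ex_lb3; auto|auto]).
    destruct H as [H|[H|H]]; (eapply pstar_trans; [apply pstar_refl; exact H|auto]).
  - destruct H as [W2 H]. left. exists t, []. split; [apply rt_refl|].
    eapply pstar_stau; [exact H|apply ex_we'; auto].
Qed.

Lemma terminal_star c c' : kam_star c c' -> terminal c -> c = c'.
Proof.
  intros H Ht. apply clos_rt_rt1n in H. inversion H; subst; auto. exfalso; eapply Ht; eauto.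
Qed.

Lemma sim_pstar t1 pi1 t2 pi2 m : kam_star (t1, pi1) (t2, pi2) -> wf_at 0 t1 -> wfs pi1 ->
  pstar (Ev t1 pi1 m) (Ev t2 pi2 m).
Proof. intros H W1 W2. exists (Ev t2 pi2 m); split; auto. apply (sim_star _ _ m H); split; auto. Qed.

Lemma cl_reach_lam s m N u : wf_at 0 s -> Cl s m N -> kam_star (s, []) (Lam u, []) ->
  pstar N (LB2 u m).
Proof.
  intros W H Hk. destruct (cl_forward _ _ _ W H) as [[t1 [pi1 [Hk1 Hp]]]|[u' [Hk1 Hp]]].
  - destruct (kam_wf0 _ _ _ W Hk1) as [W1 W2].
    pose proof (kam_star_det _ _ _ Hk1 Hk (term_lam u)) as Hk2.
    destruct (kam_wf0 _ _ _ W Hk) as [Wu _].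
    eapply pstar_trans; [exact Hp|]. eapply pstar_trans; [apply sim_pstar; eauto|].
    eapply pstar_trans; [apply pstar_stau', ex_lam_nil; auto|]. apply pstar_stau', ex_lb1; auto.
  - pose proof (kam_star_det _ _ _ Hk1 Hk (term_lam u)) as Hk2.
    apply terminal_star in Hk2; [|apply term_lam]. injection Hk2 as ->. auto.
Qed.

Lemma cl_reach_fvar s m N f sg : wf_at 0 s -> Cl s m N -> kam_star (s, []) (FVar f, sg) ->
  pstar N (Ev (FVar f) sg m).
Proof.
  intros W H Hk. destruct (cl_forward _ _ _ W H) as [[t1 [pi1 [Hk1 Hp]]]|[u' [Hk1 Hp]]].
  - destruct (kam_wf0 _ _ _ W Hk1) as [W1 W2].
    pose proof (kam_star_det _ _ _ Hk1 Hk (term_fvar f sg)) as Hk2.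
    eapply pstar_trans; [exact Hp|]. apply sim_pstar; eauto.
  - pose proof (kam_star_det _ _ _ Hk1 Hk (term_fvar f sg)) as Hk2.
    apply terminal_star in Hk2; [|apply term_lam]. discriminate.
Qed.

Definition KSpre (pi : stack) (m : nat) (M : list proc) : Prop :=
  Permutation M (K0 pi m) \/ Permutation M (K1 pi m) \/ Permutation M (K2 pi m) \/
  Permutation M (K3 pi m) \/ (pi = [] /\ Permutation M (Dn m)) \/
  (exists t p, pi = t :: p /\ (Permutation M (K4 t p m) \/ Permutation M (K5 t p m))).
Definition KSe t p m M := Permutation M (K6e t p m) \/ Permutation M (We t p m).
Definition KSs t p m M := Permutation M (K6s t p m) \/ Permutation M (Ws p m).

Lemma ks_pre_tau pi m M Z : wfs pi -> KSpre pi m M -> sstep M LTau Z ->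
  KSpre pi m Z \/ (exists t p, pi = t :: p /\ Permutation M (K5 t p m) /\
                     (Permutation Z (K6e t p m) \/ Permutation Z (K6s t p m))).
Proof.
  intros W H Hs. unfold KSpre in H.
  destruct H as [H|[H|[H|[H|[[E H]|[t [p [E [H|H]]]]]]]]]; pose proof (sstep_perm_l _ _ _ _ H Hs) as Hs';
    try subst pi.
  - apply inv_k0 in Hs' as [[]|[_ HP]]; auto. left; unfold KSpre; auto.
  - apply inv_k1 in Hs' as [[]|[_ HP]]; auto. left; unfold KSpre; auto.
  - apply inv_k2 in Hs' as [[]|[_ HP]]; auto. left; unfold KSpre; auto 6.
  - destruct pi as [|t p].
    + apply inv_k3nil in Hs' as [[]|[_ HP]]; auto. left; unfold KSpre; auto 7.
    + inversion W; subst. apply inv_k3cons in Hs' as [[]|[_ HP]]; auto.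
      left; unfold KSpre; right; right; right; right; right. eauto.
  - apply inv_dn in Hs' as [[]|[Q [E' _]]]; discriminate.
  - inversion W; subst. apply inv_k4 in Hs' as [[]|[_ HP]]; auto.
    left; unfold KSpre; right; right; right; right; right. eauto.
  - inversion W; subst. apply inv_k5 in Hs' as [[]|[[_ HP]|[_ HP]]]; auto; right; exists t, p; auto.
Qed.

Lemma ks_pre_in pi m M a X Z : wfs pi -> KSpre pi m M -> ~ In a H_names -> sstep M (LIn a X) Z ->
  pi = [] /\ a = n_done /\ Permutation M (Dn m) /\ Permutation Z (In_ m).
Proof.
  intros W H Ha Hs. unfold KSpre in H.
  destruct H as [H|[H|[H|[H|[[E H]|[t [p [E [H|H]]]]]]]]]; pose proof (sstep_perm_l _ _ _ _ H Hs) as Hs';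
    try subst pi.
  - apply inv_k0 in Hs' as [Hl|[E _]]; first [kill_in Ha | auto].
  - apply inv_k1 in Hs' as [Hl|[E _]]; first [kill_in Ha | auto].
  - apply inv_k2 in Hs' as [Hl|[E _]]; first [kill_in Ha | auto].
  - destruct pi as [|t p].
    + apply inv_k3nil in Hs' as [Hl|[E _]]; first [kill_in Ha | auto].
    + inversion W; subst. apply inv_k3cons in Hs' as [Hl|[E _]]; first [kill_in Ha | auto].
  - apply inv_dn in Hs' as [Hl|[Q [E' HP]]]; [kill_in Ha|]. injection E' as <- _. auto.
  - inversion W; subst. apply inv_k4 in Hs' as [Hl|[E' _]]; first [kill_in Ha | auto].
  - inversion W; subst. apply inv_k5 in Hs' as [Hl|[[E' _]|[E' _]]]; first [kill_in Ha | auto].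
Qed.

Lemma kse_tau t p m M Z : wf_at 0 t -> wfs p -> KSe t p m M -> sstep M LTau Z -> KSe t p m Z.
Proof.
  intros W1 W2 [H|H] Hs; pose proof (sstep_perm_l _ _ _ _ H Hs) as Hs'.
  - apply inv_k6e in Hs' as [[]|[_ HP]]; auto. right; auto.
  - apply inv_we in Hs' as [[]|[Q [E _]]]; auto. discriminate.
Qed.

Lemma kse_in t p m M a X Z : wf_at 0 t -> wfs p -> KSe t p m M -> ~ In a H_names ->
  sstep M (LIn a X) Z -> a = n_enter /\ Permutation M (We t p m) /\ Permutation Z (We' t p m).
Proof.
  intros W1 W2 [H|H] Ha Hs; pose proof (sstep_perm_l _ _ _ _ H Hs) as Hs'.
  - apply inv_k6e in Hs' as [Hl|[E _]]; first [kill_in Ha | auto].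
  - apply inv_we in Hs' as [Hl|[Q [E HP]]]; [kill_in Ha| |auto|auto]. injection E as <- _. auto.
Qed.

Lemma kss_tau t p m M Z : wf_at 0 t -> wfs p -> KSs t p m M -> sstep M LTau Z -> KSs t p m Z.
Proof.
  intros W1 W2 [H|H] Hs; pose proof (sstep_perm_l _ _ _ _ H Hs) as Hs'.
  - apply inv_k6s in Hs' as [[]|[_ HP]]; auto. right; auto.
  - apply inv_ws in Hs' as [[]|[Q [E _]]]; auto. discriminate.
Qed.

Lemma kss_in t p m M a X Z : wf_at 0 t -> wfs p -> KSs t p m M -> ~ In a H_names ->
  sstep M (LIn a X) Z -> a = n_skip /\ Permutation M (Ws p m) /\ Permutation Z (K0 p m).
Proof.
  intros W1 W2 [H|H] Ha Hs; pose proof (sstep_perm_l _ _ _ _ H Hs) as Hs'.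
  - apply inv_k6s in Hs' as [Hl|[E _]]; first [kill_in Ha | auto].
  - apply inv_ws in Hs' as [Hl|[Q [E HP]]]; [kill_in Ha| |auto]. injection E as <- _. auto.
Qed.

Lemma ks_reach_nil m M : KSpre [] m M -> pstar M (Dn m).
Proof.
  assert (H3 : pstar (K3 [] m) (Dn m)) by (apply pstar_stau', ex_k3nil).
  assert (H2 : pstar (K2 [] m) (Dn m)) by (eapply pstar_trans; [apply pstar_stau', ex_k2; constructor|auto]).
  assert (H1 : pstar (K1 [] m) (Dn m)) by (eapply pstar_trans; [apply pstar_stau', ex_k1; constructor|auto]).
  assert (H0 : pstar (K0 [] m) (Dn m)) by (eapply pstar_trans; [apply pstar_stau', ex_k0; constructor|auto]).
  intros H. unfold KSpre in H.
  destruct H as [H|[H|[H|[H|[[E H]|[t [p [E [H|H]]]]]]]]]; try discriminate;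
    (eapply pstar_trans; [apply pstar_refl; exact H|auto]). apply pstar_refl; auto.
Qed.

Lemma ks_reach_cons t p m M : wf_at 0 t -> wfs p -> KSpre (t :: p) m M -> pstar M (K5 t p m).
Proof.
  intros W1 W2.
  assert (W : wfs (t :: p)) by (constructor; auto).
  assert (H4 : pstar (K4 t p m) (K5 t p m)) by (apply pstar_stau', ex_k4; auto).
  assert (H3 : pstar (K3 (t :: p) m) (K5 t p m)) by (eapply pstar_trans; [apply pstar_stau', ex_k3cons; auto|auto]).
  assert (H2 : pstar (K2 (t :: p) m) (K5 t p m)) by (eapply pstar_trans; [apply pstar_stau', ex_k2; auto|auto]).
  assert (H1 : pstar (K1 (t :: p) m) (K5 t p m)) by (eapply pstar_trans; [apply pstar_stau', ex_k1; auto|auto]).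
  assert (H0 : pstar (K0 (t :: p) m) (K5 t p m)) by (eapply pstar_trans; [apply pstar_stau', ex_k0; auto|auto]).
  intros H. unfold KSpre in H.
  destruct H as [H|[H|[H|[H|[[E H]|[t' [p' [E [H|H]]]]]]]]]; try discriminate;
    try (injection E as <- <-);
    (eapply pstar_trans; [apply pstar_refl; exact H|auto]). apply pstar_refl; auto.
Qed.

Lemma kse_reach t p m M : wf_at 0 t -> wfs p -> KSe t p m M -> pstar M (We t p m).
Proof.
  intros W1 W2 [H|H]; [eapply pstar_stau; [exact H|apply ex_k6e; auto]|apply pstar_refl; auto].
Qed.

Lemma kss_reach t p m M : wf_at 0 t -> wfs p -> KSs t p m M -> pstar M (Ws p m).
Proof.
  intros W1 W2 [H|H]; [eapply pstar_stau; [exact H|apply ex_k6s; auto]|apply pstar_refl; auto].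
Qed.

Lemma NV_KSpre pi m M : KSpre pi m M -> NV M.
Proof.
  intros H. unfold KSpre in H.
  destruct H as [H|[H|[H|[H|[[E H]|[t [p [E [H|H]]]]]]]]];
    eapply NV_perm; try (apply Permutation_sym; exact H);
    auto using NV_K0, NV_K1, NV_K2, NV_K3, NV_Dn, NV_K4, NV_K5.
Qed.

Lemma NV_KSe t p m M : KSe t p m M -> NV M.
Proof. intros [H|H]; eapply NV_perm; try (apply Permutation_sym; exact H); auto using NV_K6e, NV_We. Qed.
Lemma NV_KSs t p m M : KSs t p m M -> NV M.
Proof. intros [H|H]; eapply NV_perm; try (apply Permutation_sym; exact H); auto using NV_K6s, NV_Ws. Qed.

From Stdlib Require Import List Arith Relations Permutation Lia.
Import ListNotations.

Definition fvlt (l : list nat) (m : nat) := forall f, In f l -> f < m.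

Section Completeness.
Variable Rel : term -> term -> Prop.
Hypothesis Hbis : nf_bisimulation Rel.

Definition Good t s m := wf_at 0 t /\ wf_at 0 s /\ Rel t s /\ fvlt (fv t ++ fv s) m.
Definition GoodS p q m := Forall2 Rel p q /\ wfs p /\ wfs q /\ fvlt (flat_map fv p ++ flat_map fv q) m.

Definition Rm (M N : list proc) : Prop :=
  (exists t s m, Good t s m /\ Cl t m M /\ Cl s m N)
  \/ (exists f p q m, GoodS p q m /\ Permutation M (Ev (FVar f) p m) /\ Permutation N (Ev (FVar f) q m))
  \/ (exists p q m, GoodS p q m /\ KSpre p m M /\ KSpre q m N)
  \/ (exists t p s q m, Good t s m /\ wfs p /\ wfs q /\ KSe t p m M /\ KSe s q m N)
  \/ (exists t p s q m, GoodS p q m /\ wf_at 0 t /\ wf_at 0 s /\ KSs t p m M /\ KSs s q m N)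
  \/ (exists m, Permutation M (In_ m) /\ Permutation N (In_ m)).

Lemma Rel_sym t s : Rel t s -> Rel s t.
Proof. apply Hbis. Qed.

Lemma Forall2_sym p q : Forall2 Rel p q -> Forall2 Rel q p.
Proof. induction 1; constructor; auto using Rel_sym. Qed.

Lemma fvlt_app_comm l1 l2 m : fvlt (l1 ++ l2) m -> fvlt (l2 ++ l1) m.
Proof. intros H f Hf. apply H. apply in_app_or in Hf as [?|?]; apply in_or_app; auto. Qed.

Lemma Good_sym t s m : Good t s m -> Good s t m.
Proof. intros [W1 [W2 [R F]]]. repeat split; auto using Rel_sym, fvlt_app_comm. Qed.

Lemma GoodS_sym p q m : GoodS p q m -> GoodS q p m.
Proof. intros [R [W1 [W2 F]]]. repeat split; auto using Forall2_sym, fvlt_app_comm. Qed.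

Lemma Rm_sym M N : Rm M N -> Rm N M.
Proof.
  unfold Rm. intros [H|[H|[H|[H|[H|H]]]]].
  - destruct H as [t [s [m [G [H1 H2]]]]]. left. exists s, t, m. auto using Good_sym.
  - destruct H as [f [p [q [m [G [H1 H2]]]]]]. right; left. exists f, q, p, m. auto using GoodS_sym.
  - destruct H as [p [q [m [G [H1 H2]]]]]. right; right; left. exists q, p, m. auto using GoodS_sym.
  - destruct H as [t [p [s [q [m [G [W1 [W2 [H1 H2]]]]]]]]]. right; right; right; left.
    exists s, q, t, p, m. auto 7 using Good_sym.
  - destruct H as [t [p [s [q [m [G [W1 [W2 [H1 H2]]]]]]]]]. right; right; right; right; left.
    exists s, q, t, p, m. auto 7 using GoodS_sym.
  - destruct H as [m [H1 H2]]. right; right; right; right; right. exists m; auto.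
Qed.

Lemma match_tau N Y S : pstar N Y -> Rm S Y -> exists N', sstar N N' /\ Lift Rm S N'.
Proof.
  intros [N' [H1 H2]] HR. exists N'; split; auto. exists S, Y; repeat split; auto.
Qed.

Lemma match_in N Y1 a X Y2 S : pstar N Y1 ->
  (exists N2, sstep Y1 (LIn a X) N2 /\ Permutation N2 Y2) -> Rm S Y2 ->
  exists N1 N2 N3, sstar N N1 /\ sstep N1 (LIn a X) N2 /\ sstar N2 N3 /\ Lift Rm S N3.
Proof.
  intros [N1 [H1 H2]] [N2 [H3 H4]] HR. exists N1, N2, N2. repeat split; auto.
  - eapply sstep_perm; [apply Permutation_sym; exact H2|exact H3].
  - apply sstar_refl.
  - exists S, Y2; repeat split; auto.
Qed.

Lemma fv_sub_t t c m : kam_star (t, []) c -> fvlt (fv t) m -> fvlt (fvc c) m.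
Proof.
  intros Hk F f Hf. apply (kam_star_fv _ _ Hk) in Hf. unfold fvc in Hf; simpl in Hf.
  rewrite app_nil_r in Hf. auto.
Qed.

Lemma fvlt_l l1 l2 m : fvlt (l1 ++ l2) m -> fvlt l1 m.
Proof. intros H f Hf; apply H, in_or_app; auto. Qed.
Lemma fvlt_r l1 l2 m : fvlt (l1 ++ l2) m -> fvlt l2 m.
Proof. intros H f Hf; apply H, in_or_app; auto. Qed.
Lemma fvlt_app l1 l2 m : fvlt l1 m -> fvlt l2 m -> fvlt (l1 ++ l2) m.
Proof. intros H1 H2 f Hf; apply in_app_or in Hf as [?|?]; auto. Qed.

Lemma goodS_from t s m f f' pi pi' : Good t s m -> kam_star (t, []) (FVar f, pi) ->
  kam_star (s, []) (FVar f', pi') -> Forall2 Rel pi pi' -> GoodS pi pi' m.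
Proof.
  intros [Wt [Ws [R F]]] Hk Hk' HF.
  destruct (kam_wf0 _ _ _ Wt Hk) as [_ W1]. destruct (kam_wf0 _ _ _ Ws Hk') as [_ W2].
  pose proof (fv_sub_t _ _ _ Hk (fvlt_l _ _ _ F)) as F1.
  pose proof (fv_sub_t _ _ _ Hk' (fvlt_r _ _ _ F)) as F2.
  unfold fvc in F1, F2; simpl in F1, F2.
  repeat split; auto. apply fvlt_app; intros g Hg; [apply F1|apply F2]; simpl; auto.
Qed.

Lemma GoodS_cons t p s q m : GoodS (t :: p) (s :: q) m -> Good t s m /\ GoodS p q m.
Proof.
  intros [HF [W1 [W2 F]]]. inversion HF; subst. inversion W1; subst. inversion W2; subst.
  split; repeat split; auto; intros g Hg; apply F; simpl;
    apply in_app_or in Hg as [Hg|Hg]; rewrite !in_app_iff; tauto.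
Qed.

Lemma Rm_MB : MB Rm.
Proof.
  intros M N HR. split; [apply Rm_sym; auto|].
  unfold Rm in HR. destruct HR as [H|[H|[H|[H|[H|H]]]]].
  -
    destruct H as [t [s [m [G [H1 H2]]]]]. pose proof G as [Wt [Ws [R F]]].
    split; [eapply NV_Cl; eauto|split].
    + intros Z Hs. apply match_tau with N; [apply pstar_refl; auto|].
      left. exists t, s, m. split; auto. split; auto. eapply cl_tau; eauto.
    + intros a X Z Ha Hs. destruct (cl_in _ _ _ _ _ _ Wt H1 Ha Hs) as
        [[Ea [u [Hk [HM HZ]]]]|[f [pi [Hk [HM [[f' [Ef [Ea HZ]]]|[Ef [Ea HZ]]]]]]]]; subst a.
      * destruct (proj1 (proj2 Hbis t s R) u Hk) as [s' [Hk' Ho]].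
        destruct (kam_wf0 _ _ _ Wt Hk) as [Wu _]. destruct (kam_wf0 _ _ _ Ws Hk') as [Wu' _].
        simpl in Wu, Wu'.
        assert (Fu : fvlt (fv u) m).
        { pose proof (fv_sub_t _ _ _ Hk (fvlt_l _ _ _ F)) as Fx. unfold fvc in Fx; simpl in Fx.
          rewrite app_nil_r in Fx; auto. }
        assert (Fu' : fvlt (fv s') m).
        { pose proof (fv_sub_t _ _ _ Hk' (fvlt_r _ _ _ F)) as Fx. unfold fvc in Fx; simpl in Fx.
          rewrite app_nil_r in Fx; auto. }
        eapply match_in; [eapply cl_reach_lam; eauto|apply ex_lb2; auto|].
        left. exists (open u (FVar m)), (open s' (FVar m)), (S m). repeat split.
        -- apply wf_open; simpl; auto.
        -- apply wf_open; simpl; auto.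
        -- apply Ho; [intro Hf; apply Fu in Hf; lia|intro Hf; apply Fu' in Hf; lia].
        -- apply fvlt_app; intros g Hg; apply fv_open in Hg; apply in_app_or in Hg as [Hg|Hg];
             try (simpl in Hg; destruct Hg as [<-|[]]; lia).
           ++ apply Fu in Hg; lia.
           ++ apply Fu' in Hg; lia.
        -- right; left. exists u, m. repeat split; auto; try (left; apply Permutation_refl).
        -- right; left. exists s', m. repeat split; auto; try (left; apply Permutation_refl).
      * subst f. destruct (proj2 (proj2 Hbis t s R) _ _ Hk) as [pi' [Hk' HF]].
        eapply match_in; [eapply cl_reach_fvar; eauto|apply ex_suc|].
        { destruct (kam_wf0 _ _ _ Ws Hk'); auto. }
        assert (GS : GoodS pi pi' m) by (eapply goodS_from; eauto).
        right; left. exists f', pi, pi', m. split; [exact GS|split; auto].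
      * subst f. destruct (proj2 (proj2 Hbis t s R) _ _ Hk) as [pi' [Hk' HF]].
        eapply match_in; [eapply cl_reach_fvar; eauto|apply ex_z|].
        { destruct (kam_wf0 _ _ _ Ws Hk'); auto. }
        assert (GS : GoodS pi pi' m) by (eapply goodS_from; eauto).
        right; right; left. exists pi, pi', m. split; [exact GS|split; left; auto].
  -
    destruct H as [f [p [q [m [GS [H1 H2]]]]]]. pose proof GS as [HF [Wp [Wq Fpq]]].
    split; [eapply NV_perm; [apply Permutation_sym; exact H1|apply NV_Ev]|split].
    + intros Z Hs. apply (sstep_perm_l _ _ _ _ H1) in Hs.
      apply inv_fvar in Hs as [[]|[[Q [f' [_ [E _]]]]|[Q [_ [E _]]]]]; auto; discriminate.
    + intros a X Z Ha Hs. apply (sstep_perm_l _ _ _ _ H1) in Hs.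
      apply inv_fvar in Hs as [Hl|[[Q [f' [Ef [E HZ]]]]|[Q [Ef [E HZ]]]]]; auto;
        [kill_in Ha| |]; injection E as E1 _; subst a f.
      * eapply match_in; [apply pstar_refl; exact H2|apply ex_suc; auto|].
        right; left. exists f', p, q, m. split; [exact GS|split; auto].
      * eapply match_in; [apply pstar_refl; exact H2|apply ex_z; auto|].
        right; right; left. exists p, q, m. split; [exact GS|split; left; auto].
  -
    destruct H as [p [q [m [GS [H1 H2]]]]]. pose proof GS as [HF [Wp [Wq Fpq]]].
    split; [eapply NV_KSpre; eauto|split].
    + intros Z Hs. destruct (ks_pre_tau _ _ _ _ Wp H1 Hs) as [HZ|[t [p' [Ep [HM [HZ|HZ]]]]]].
      * apply match_tau with N; [apply pstar_refl; auto|].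
        right; right; left. exists p, q, m. auto.
      * subst p. inversion HF as [|? s ? q' Rts HF']; subst.
        destruct (GoodS_cons _ _ _ _ _ GS) as [Gts GS'].
        pose proof Gts as [Wt [Ws _]]. pose proof GS' as [_ [Wp' [Wq' _]]].
        apply match_tau with (K6e s q' m).
        { eapply pstar_trans; [eapply ks_reach_cons; eauto|]. apply pstar_stau', ex_k5e; auto. }
        right; right; right; left. exists t, p', s, q', m.
        split; [exact Gts|split; [auto|split; [auto|split; left; auto]]].
      * subst p. inversion HF as [|? s ? q' Rts HF']; subst.
        destruct (GoodS_cons _ _ _ _ _ GS) as [Gts GS'].
        pose proof Gts as [Wt [Ws _]]. pose proof GS' as [_ [Wp' [Wq' _]]].
        apply match_tau with (K6s s q' m).
        { eapply pstar_trans; [eapply ks_reach_cons; eauto|]. apply pstar_stau', ex_k5s; auto. }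
        right; right; right; right; left. exists t, p', s, q', m.
        split; [exact GS'|split; [auto|split; [auto|split; left; auto]]].
    + intros a X Z Ha Hs. destruct (ks_pre_in _ _ _ _ _ _ Wp H1 Ha Hs) as [Ep [Ea [HM HZ]]].
      subst p a. inversion HF; subst.
      eapply match_in; [apply ks_reach_nil; eauto|apply ex_dn|].
      right; right; right; right; right. exists m; split; auto.
  -
    destruct H as [t [p [s [q [m [G [Wp [Wq [H1 H2]]]]]]]]]. pose proof G as [Wt [Ws [R F]]].
    split; [eapply NV_KSe; eauto|split].
    + intros Z Hs. apply match_tau with N; [apply pstar_refl; auto|].
      right; right; right; left. exists t, p, s, q, m.
      split; [exact G|split; [auto|split; [auto|split; [eapply kse_tau; eauto|auto]]]].
    + intros a X Z Ha Hs. destruct (kse_in _ _ _ _ _ _ _ Wt Wp H1 Ha Hs) as [Ea [HM HZ]]. subst a.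
      eapply match_in; [eapply kse_reach; eauto|apply ex_we; auto|].
      left. exists t, s, m. split; auto. split.
      * right; right. exists p; auto.
      * right; right. exists q; auto.
  -
    destruct H as [t [p [s [q [m [GS [Wt [Ws [H1 H2]]]]]]]]]. pose proof GS as [HF [Wp [Wq Fpq]]].
    split; [eapply NV_KSs; eauto|split].
    + intros Z Hs. apply match_tau with N; [apply pstar_refl; auto|].
      right; right; right; right; left. exists t, p, s, q, m. split; [exact GS|].
      split; [auto|split; [auto|split; [eapply kss_tau; eauto|auto]]].
    + intros a X Z Ha Hs. destruct (kss_in _ _ _ _ _ _ _ Wt Wp H1 Ha Hs) as [Ea [HM HZ]]. subst a.
      eapply match_in; [eapply kss_reach; eauto|apply ex_ws; auto|].
      right; right; left. exists p, q, m. split; [exact GS|split; left; auto].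
  -
    destruct H as [m [H1 H2]].
    split; [eapply NV_perm; [apply Permutation_sym; exact H1|apply NV_In]|split].
    + intros Z Hs. apply (sstep_perm_l _ _ _ _ H1) in Hs. apply inv_in in Hs. destruct Hs.
    + intros a X Z Ha Hs. apply (sstep_perm_l _ _ _ _ H1) in Hs. apply inv_in in Hs.
      exfalso; apply Ha; exact Hs.
Qed.

End Completeness.

Definition maxl (l : list nat) := fold_right max 0 l.
Lemma maxl_ge l f : In f l -> f <= maxl l.
Proof. induction l; simpl; intros H; [destruct H|]. destruct H as [<-|H]; [lia|]. apply IHl in H; lia. Qed.

Lemma flatten_tr_ev t n : wf_at 0 t -> Permutation (flatten (tr_ev t [] n)) (Ev t [] n).
Proof.
  intros W. unfold tr_ev. cbn [flatten]. rewrite tr_term_flatten by auto. rewrite fl_Rec.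
  unfold Ev, Eb. simpl. apply Permutation_refl.
Qed.

Lemma completeness t s : well_formed t -> well_formed s -> nf_bisimilar t s ->
  exists n, (forall f, In f (fv t) \/ In f (fv s) -> f < n) /\
     barbed_bisimilar H_names (tr_ev t [] n) (tr_ev s [] n).
Proof.
  intros Wt Ws [Rel [Hb HR]]. exists (S (maxl (fv t ++ fv s))).
  assert (F : fvlt (fv t ++ fv s) (S (maxl (fv t ++ fv s)))).
  { intros f Hf. apply maxl_ge in Hf. lia. }
  split.
  { intros f Hf. apply F. apply in_or_app; auto. }
  eapply (MB_bb (Rm Rel)); [apply Rm_MB; auto| |apply flatten_tr_ev; auto|apply flatten_tr_ev; auto].
  left. exists t, s, (S (maxl (fv t ++ fv s))). split; [repeat split; auto|].
  split; left.
  - exists t, []. split; [apply rt_refl|]. left; apply Permutation_refl.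
  - exists s, []. split; [apply rt_refl|]. left; apply Permutation_refl.
Qed.

From Stdlib Require Import List Arith Relations Permutation Lia.
Import ListNotations.

Notation bb := (barbed_bisimilar H_names).

Lemma bb_sym P Q : bb P Q -> bb Q P.
Proof. intros [R [[Hs Hb] HR]]. exists R; split; [split|]; auto. Qed.

Lemma bb_ctx P Q R : bb P Q -> (forall a, In a (fn R) -> ~ In a H_names) -> bb (PPar P R) (PPar Q R).
Proof. intros [Rl [[Hs Hb] HR]] HRn. exists Rl; split; [split|]; auto. apply (Hb _ _ HR); auto. Qed.

Lemma bb_barb P Q mu : bb P Q -> sbarb H_names P mu -> wbarb H_names Q mu.
Proof. intros [Rl [[Hs Hb] HR]] H. apply (Hb _ _ HR); auto. Qed.

Lemma bb_tau_star P Q P' : bb P Q -> tau_star P P' -> exists Q', tau_star Q Q' /\ bb P' Q'.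
Proof.
  intros [Rl [[Hs Hb] HR]] H. apply clos_rt_rt1n in H. revert Q HR. induction H; intros Q HR.
  - exists Q; split; [apply rt_refl|]. exists Rl; split; [split|]; auto.
  - destruct (proj2 (proj2 (Hb _ _ HR)) y H) as [Q1 [H1 H2]].
    destruct (IHclos_refl_trans_1n Q1 H2) as [Q2 [H3 H4]].
    exists Q2; split; auto. eapply rt_trans; eauto.
Qed.

Lemma tau_star_soup P P' M : tau_star P P' -> Permutation (flatten P) M ->
  exists M', sstar M M' /\ Permutation (flatten P') M'.
Proof.
  intros H. apply clos_rt_rt1n in H. revert M. induction H; intros M HP.
  - exists M; split; auto. apply sstar_refl.
  - apply step_sstep in H as [S [H1 H2]]. apply (sstep_perm _ M) in H1; auto.
    destruct (IHclos_refl_trans_1n S H2) as [M' [H3 H4]].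
    exists M'; split; auto. eapply sstar_trans; [apply sstar_step; exists S; split; eauto|auto].
Qed.

Lemma lift_pstar P M Y : Permutation (flatten P) M -> pstar M Y ->
  exists P', tau_star P P' /\ Permutation (flatten P') Y.
Proof.
  intros HP [M' [H1 H2]]. destruct (lift_sstar M M' P [] H1) as [P' [H3 H4]].
  { rewrite app_nil_r; auto. }
  exists P'; split; auto. rewrite app_nil_r in H4. eapply Permutation_trans; eauto.
Qed.

Lemma msg_step P M a X M2 : Permutation (flatten P) M -> sstep M (LIn a X) M2 ->
  exists P', tau_step (PPar P (POut a X)) P' /\ Permutation (flatten P') M2.
Proof.
  intros HP H. apply sstep_inv_in in H as [B [r [H1 ->]]].
  assert (Hs : sstep (flatten (PPar P (POut a X))) LTau (r ++ flatten (psubst B X))).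
  { apply (ss_tau _ a X B r). simpl. perm. }
  apply sstep_step in Hs as [P' [H2 H3]]. exists P'; split; auto.
Qed.

Lemma msg_analysis Q Q' N a : tau_star (PPar Q (POut a PNil)) Q' -> Permutation (flatten Q) N ->
  (exists N1, sstar N N1 /\ Permutation (flatten Q') (N1 ++ [POut a PNil])) \/
  (exists N1 N2 N3, sstar N N1 /\ sstep N1 (LIn a PNil) N2 /\ sstar N2 N3 /\ Permutation (flatten Q') N3).
Proof.
  intros H HN. apply clos_rt_rt1n in H.
  remember (PPar Q (POut a PNil)) as Q0 eqn:E.
  assert (H0 : (exists N1, sstar N N1 /\ Permutation (flatten Q0) (N1 ++ [POut a PNil])) \/
    (exists N1 N2 N3, sstar N N1 /\ sstep N1 (LIn a PNil) N2 /\ sstar N2 N3 /\ Permutation (flatten Q0) N3)).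
  { left. exists N; split; [apply sstar_refl|]. subst; simpl. perm. }
  clear E HN. revert H0. induction H as [|x y z Hxy Hyz IH]; intros H0; auto.
  apply IH. clear IH.
  apply step_sstep in Hxy as [S [Hs HS]].
  destruct H0 as [[N1 [H1 H2]]|[N1 [N2 [N3 [H1 [H2 [H3 H4]]]]]]].
  - apply (sstep_perm _ _ _ _ H2) in Hs. apply sstep_inv_tau in Hs as [b [X [B [r [Hp ->]]]]].
    destruct (perm_in_app _ _ _ _ Hp) as [[r1 Hr]|[r2 Hr]].
    + assert (Hq : Permutation (r1 ++ [POut a PNil]) (PIn b B :: r)) by perm.
      destruct (perm_in_app _ _ _ _ Hq) as [[r1' Hr']|[r2' Hr']].
      * left. exists (r1' ++ flatten (psubst B X)). split.
        -- eapply sstar_trans; [exact H1|]. apply sstar_step.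
           exists (r1' ++ flatten (psubst B X)); split; auto. apply (ss_tau _ b X B r1'). perm.
        -- perm.
      * apply perm_single_cons in Hr' as [E _]; discriminate.
    + apply perm_single_cons in Hr as [E ->]. injection E as E1 E2. subst.
      right. exists N1, (r ++ flatten (psubst B PNil)), (r ++ flatten (psubst B PNil)).
      split; [auto|split; [constructor; perm|split; [apply sstar_refl|perm]]].
  - right. exists N1, N2.
    apply (sstep_perm _ _ _ _ H4) in Hs.
    exists S; split; [auto|split; [auto|split; [|auto]]].
    eapply sstar_trans; [exact H3|]. apply sstar_step. exists S; split; auto.
Qed.

Lemma out_contra P Q M N a X : bb P Q -> Permutation (flatten P) M -> NV M ->
  Permutation (flatten Q) (N ++ [POut a X]) -> ~ In a H_names -> False.
Proof.
  intros Hb HP HN HQ Ha.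
  assert (Hbar : sbarb H_names Q (BOut a)).
  { simpl. split; auto. assert (Hs : sstep (flatten Q) (LOut a X) N) by (constructor; perm).
    apply sstep_step in Hs as [Q' [Hs _]]. eauto. }
  apply (bb_barb _ _ _ (bb_sym _ _ Hb)) in Hbar as [P' [H1 [_ [Y [R HR]]]]].
  destruct (tau_star_soup _ _ _ H1 HP) as [M' [H2 H3]].
  apply step_sstep in HR as [S [HS _]]. apply (sstep_perm _ _ _ _ H3) in HS.
  apply sstep_inv_out in HS. apply Ha. eapply NV_out; [|exact HS]. eapply NV_sstar; eauto.
Qed.

Lemma ctx_step P Q M a M2 : bb P Q -> Permutation (flatten P) M -> sstep M (LIn a PNil) M2 ->
  ~ In a H_names -> NV M2 ->
  exists P2 Q2 N1 N2 N3, Permutation (flatten P2) M2 /\ bb P2 Q2 /\ sstar (flatten Q) N1 /\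
    sstep N1 (LIn a PNil) N2 /\ sstar N2 N3 /\ Permutation (flatten Q2) N3.
Proof.
  intros Hb HP Hs Ha HN.
  assert (Hb' : bb (PPar P (POut a PNil)) (PPar Q (POut a PNil))).
  { apply bb_ctx; auto. simpl. intros c [<-|[]]; auto. }
  destruct (msg_step _ _ _ _ _ HP Hs) as [P2 [H1 H2]].
  destruct (bb_tau_star _ _ _ Hb' (rt_step _ _ _ _ H1)) as [Q2 [H3 H4]].
  destruct (msg_analysis _ _ (flatten Q) _ H3 (Permutation_refl _)) as
      [[N1 [H5 H6]]|[N1 [N2 [N3 [H5 [H6 [H7 H8]]]]]]].
  - exfalso. eapply (out_contra P2 Q2 M2 N1 a PNil); eauto.
  - exists P2, Q2, N1, N2, N3. repeat split; auto.
Qed.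

From Stdlib Require Import List Arith Relations Permutation Lia.
Import ListNotations.

Lemma Cl_sstar t m M M' : wf_at 0 t -> Cl t m M -> sstar M M' -> Cl t m M'.
Proof.
  intros W H Hs. apply clos_rt_rt1n in Hs. induction Hs; auto.
  apply IHHs. destruct H0 as [S [H1 H2]]. eapply Cl_perm; [exact H2|]. eapply cl_tau; eauto.
Qed.

Definition KSall (sg : stack) (m : nat) (M : list proc) : Prop :=
  KSpre sg m M \/ (exists s q, sg = s :: q /\ (KSe s q m M \/ KSs s q m M)).

Lemma KSall_perm sg m M M' : Permutation M M' -> KSall sg m M -> KSall sg m M'.
Proof.
  intros HP H.
  assert (HX : forall X, Permutation M X -> Permutation M' X)
    by (intros; eapply Permutation_trans; [apply Permutation_sym, HP|auto]).
  unfold KSall, KSpre, KSe, KSs in *.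
  destruct H as [[H|[H|[H|[H|[[E H]|[t [p [E [H|H]]]]]]]]]|[s [q [E [[H|H]|[H|H]]]]]]; eauto 10.
  - left; right; right; right; right; right. exists t, p. auto.
  - left; right; right; right; right; right. exists t, p. auto.
Qed.

Lemma KSall_tau sg m M Z : wfs sg -> KSall sg m M -> sstep M LTau Z -> KSall sg m Z.
Proof.
  intros W [H|[s [q [E [H|H]]]]] Hs.
  - destruct (ks_pre_tau _ _ _ _ W H Hs) as [H'|[t [p [E [HM [HZ|HZ]]]]]]; [left; auto| |];
      right; exists t, p; split; auto; [left|right]; left; auto.
  - subst sg; inversion W; subst. right; exists s, q; split; auto. left; eapply kse_tau; eauto.
  - subst sg; inversion W; subst. right; exists s, q; split; auto. right; eapply kss_tau; eauto.
Qed.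

Lemma KSall_sstar sg m M M' : wfs sg -> KSall sg m M -> sstar M M' -> KSall sg m M'.
Proof.
  intros W H Hs. apply clos_rt_rt1n in Hs. induction Hs; auto.
  apply IHHs. destruct H0 as [S [H1 H2]]. eapply KSall_perm; [exact H2|]. eapply KSall_tau; eauto.
Qed.

Lemma KSall_in sg m M a X Z : wfs sg -> KSall sg m M -> ~ In a H_names -> sstep M (LIn a X) Z ->
  (sg = [] /\ a = n_done) \/
  (exists s q, sg = s :: q /\ a = n_enter /\ Permutation Z (We' s q m)) \/
  (exists s q, sg = s :: q /\ a = n_skip /\ Permutation Z (K0 q m)).
Proof.
  intros W [H|[s [q [E [H|H]]]]] Ha Hs.
  - destruct (ks_pre_in _ _ _ _ _ _ W H Ha Hs) as [E [Ea _]]. left; auto.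
  - subst sg; inversion W; subst. destruct (kse_in _ _ _ _ _ _ _ H2 H3 H Ha Hs) as [Ea [_ HZ]].
    right; left; eauto.
  - subst sg; inversion W; subst. destruct (kss_in _ _ _ _ _ _ _ H2 H3 H Ha Hs) as [Ea [_ HZ]].
    right; right; eauto.
Qed.

Lemma noTau_fvar f p m M M' : wfs p -> Permutation M (Ev (FVar f) p m) -> sstar M M' ->
  Permutation M' (Ev (FVar f) p m).
Proof.
  intros W HP Hs. apply clos_rt_rt1n in Hs. destruct Hs; auto.
  destruct H as [S [H1 _]]. apply (sstep_perm_l _ _ _ _ HP) in H1.
  apply inv_fvar in H1 as [[]|[[Q [f' [_ [E _]]]]|[Q [_ [E _]]]]]; auto; discriminate.
Qed.

Lemma notH_lambda : ~ In n_lambda H_names. Proof. cbv; intuition discriminate. Qed.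
Lemma notH_suc : ~ In n_suc H_names. Proof. cbv; intuition discriminate. Qed.
Lemma notH_z : ~ In n_z H_names. Proof. cbv; intuition discriminate. Qed.
Lemma notH_done : ~ In n_done H_names. Proof. cbv; intuition discriminate. Qed.
Lemma notH_enter : ~ In n_enter H_names. Proof. cbv; intuition discriminate. Qed.
Lemma notH_skip : ~ In n_skip H_names. Proof. cbv; intuition discriminate. Qed.

Definition SR (t s : term) : Prop :=
  wf_at 0 t /\ wf_at 0 s /\ exists m P Q, fvlt (fv t ++ fv s) m /\ bb P Q /\
    Cl t m (flatten P) /\ Cl s m (flatten Q).

Lemma follow P Q M Y : bb P Q -> Permutation (flatten P) M -> pstar M Y ->
  exists P1 Q1 N1, tau_star P P1 /\ Permutation (flatten P1) Y /\ bb P1 Q1 /\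
    sstar (flatten Q) N1 /\ Permutation (flatten Q1) N1.
Proof.
  intros Hb HP Hp. destruct (lift_pstar _ _ _ HP Hp) as [P1 [H1 H2]].
  destruct (bb_tau_star _ _ _ Hb H1) as [Q1 [H3 H4]].
  destruct (tau_star_soup _ _ (flatten Q) H3 (Permutation_refl _)) as [N1 [H5 H6]].
  exists P1, Q1, N1. auto.
Qed.

Lemma fvlt_sub l1 l2 m : incl l1 l2 -> fvlt l2 m -> fvlt l1 m.
Proof. intros H1 H2 f Hf. apply H2, H1, Hf. Qed.

Lemma stack_match m pi : forall sg P Q, wfs pi -> wfs sg ->
  fvlt (flat_map fv pi ++ flat_map fv sg) m -> bb P Q ->
  Permutation (flatten P) (K0 pi m) -> KSall sg m (flatten Q) -> Forall2 SR pi sg.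
Proof.
  induction pi as [|t1 pi' IH]; intros sg P Q Wp Wsg F Hb HP HQ.
  - destruct (follow P Q (K0 [] m) (Dn m) Hb HP) as [P1 [Q1 [N1 [_ [HP1 [Hb1 [HN1 HQ1]]]]]]].
    { apply ks_reach_nil. left; apply Permutation_refl. }
    assert (HK1 : KSall sg m (flatten Q1)).
    { eapply KSall_perm; [apply Permutation_sym; exact HQ1|]. eapply KSall_sstar; eauto. }
    assert (Hbar : sbarb H_names P1 (BIn n_done)).
    { simpl. split; [apply notH_done|]. destruct (ex_dn m PNil) as [N2 [Hs _]].
      apply (sstep_perm _ (flatten P1)) in Hs; [|apply Permutation_sym; auto].
      apply sstep_step in Hs as [R [HR _]]. eauto. }
    apply (bb_barb _ _ _ Hb1) in Hbar as [Q1' [Ht [_ [X [R HR]]]]].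
    destruct (tau_star_soup _ _ (flatten Q1) Ht (Permutation_refl _)) as [M' [H5 H6]].
    apply step_sstep in HR as [S [HS _]]. apply (sstep_perm _ _ _ _ H6) in HS.
    destruct (KSall_in _ _ _ _ _ _ Wsg (KSall_sstar _ _ _ _ Wsg HK1 H5) notH_done HS)
      as [[-> _]|[[s [q [_ [E _]]]]|[s [q [_ [E _]]]]]]; try discriminate. constructor.
  - inversion Wp as [|? ? Wt1 Wp']; subst.
    assert (HK0 : KSpre (t1 :: pi') m (K0 (t1 :: pi') m)) by (left; apply Permutation_refl).
    destruct (follow P Q (K0 (t1 :: pi') m) (We t1 pi' m) Hb HP) as
        [P1 [Q1 [N1 [_ [HP1 [Hb1 [HN1 HQ1]]]]]]].
    { eapply pstar_trans; [apply (ks_reach_cons t1 pi' m); auto|].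
      eapply pstar_trans; [apply pstar_stau', ex_k5e; auto|]. apply pstar_stau', ex_k6e; auto. }
    assert (HK1 : KSall sg m (flatten Q1)).
    { eapply KSall_perm; [apply Permutation_sym; exact HQ1|]. eapply KSall_sstar; eauto. }
    destruct (ex_we t1 pi' m PNil Wt1 Wp') as [N2 [Hs2 HN2]].
    destruct (ctx_step _ _ _ _ _ Hb1 HP1 Hs2 notH_enter) as
        [P2 [Q2 [M1 [M2 [M3 [HP2 [Hb2 [HM1 [HM2 [HM3 HQ2]]]]]]]]]].
    { eapply NV_perm; [apply Permutation_sym; exact HN2|apply NV_We']. }
    destruct (KSall_in _ _ _ _ _ _ Wsg (KSall_sstar _ _ _ _ Wsg HK1 HM1) notH_enter HM2)
      as [[_ E]|[[s1 [sg' [Esg [_ HZ]]]]|[s [q [_ [E _]]]]]]; try discriminate.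
    subst sg. inversion Wsg as [|? ? Ws1 Wsg']; subst.
    assert (HS1 : SR t1 s1).
    { split; auto. split; auto. exists m, P2, Q2. split; [|split; [auto|split]].
      - eapply fvlt_sub; [|exact F]. intros f Hf; simpl; rewrite !in_app_iff in *; tauto.
      - right; right. exists pi'. split; auto. eapply Permutation_trans; eauto.
      - eapply Cl_perm; [apply Permutation_sym; exact HQ2|]. eapply Cl_sstar; eauto.
        right; right. exists sg'; auto. }
    destruct (follow P Q (K0 (t1 :: pi') m) (Ws pi' m) Hb HP) as
        [P1' [Q1' [N1' [_ [HP1' [Hb1' [HN1' HQ1']]]]]]].
    { eapply pstar_trans; [apply (ks_reach_cons t1 pi' m); auto|].
      eapply pstar_trans; [apply pstar_stau', ex_k5s; auto|]. apply pstar_stau', ex_k6s; auto. }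
    assert (HK1' : KSall (s1 :: sg') m (flatten Q1')).
    { eapply KSall_perm; [apply Permutation_sym; exact HQ1'|]. apply (KSall_sstar _ _ _ _ Wsg HQ HN1'). }
    destruct (ex_ws pi' m PNil Wp') as [N2' [Hs2' HN2']].
    destruct (ctx_step _ _ _ _ _ Hb1' HP1' Hs2' notH_skip) as
        [P2' [Q2' [M1' [M2' [M3' [HP2' [Hb2' [HM1' [HM2' [HM3' HQ2']]]]]]]]]].
    { eapply NV_perm; [apply Permutation_sym; exact HN2'|apply NV_K0]. }
    destruct (KSall_in _ _ _ _ _ _ Wsg (KSall_sstar _ _ _ _ Wsg HK1' HM1') notH_skip HM2')
      as [[_ E]|[[s [q [_ [E _]]]]|[s1' [sg'' [Esg [_ HZ']]]]]]; try discriminate.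
    injection Esg as <- <-.
    constructor; auto.
    apply (IH sg' P2' Q2'); auto.
    + eapply fvlt_sub; [|exact F]. intros f Hf; simpl; rewrite !in_app_iff in *; tauto.
    + eapply Permutation_trans; eauto.
    + eapply KSall_perm; [apply Permutation_sym; exact HQ2'|]. apply (KSall_sstar _ _ M2'); auto.
      left. left. auto.
Qed.

Lemma num_match m g : forall g' pi sg P Q, wfs pi -> wfs sg ->
  fvlt (flat_map fv pi ++ flat_map fv sg) m -> bb P Q ->
  Permutation (flatten P) (Ev (FVar g) pi m) -> Permutation (flatten Q) (Ev (FVar g') sg m) ->
  g = g' /\ Forall2 SR pi sg.
Proof.
  induction g as [|g IH]; intros g' pi sg P Q Wp Wsg F Hb HP HQ.
  - destruct (ex_z pi m PNil Wp) as [N2 [Hs2 HN2]].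
    destruct (ctx_step _ _ _ _ _ Hb HP Hs2 notH_z) as
        [P2 [Q2 [M1 [M2 [M3 [HP2 [Hb2 [HM1 [HM2 [HM3 HQ2]]]]]]]]]].
    { eapply NV_perm; [apply Permutation_sym; exact HN2|apply NV_K0]. }
    pose proof (noTau_fvar _ _ _ _ _ Wsg HQ HM1) as HM1'.
    apply (sstep_perm_l _ _ _ _ HM1') in HM2.
    apply inv_fvar in HM2 as [Hl|[[Q' [f' [Ef [E HZ]]]]|[Q' [Ef [E HZ]]]]]; auto.
    + exfalso; apply notH_z; exact Hl.
    + discriminate.
    + subst g'. split; auto. apply (stack_match m pi sg P2 Q2); auto.
      * eapply Permutation_trans; eauto.
      * eapply KSall_perm; [apply Permutation_sym; exact HQ2|]. apply (KSall_sstar _ _ M2); auto.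
        left; left; auto.
  - destruct (ex_suc g pi m PNil Wp) as [N2 [Hs2 HN2]].
    destruct (ctx_step _ _ _ _ _ Hb HP Hs2 notH_suc) as
        [P2 [Q2 [M1 [M2 [M3 [HP2 [Hb2 [HM1 [HM2 [HM3 HQ2]]]]]]]]]].
    { eapply NV_perm; [apply Permutation_sym; exact HN2|apply NV_Ev]. }
    pose proof (noTau_fvar _ _ _ _ _ Wsg HQ HM1) as HM1'.
    apply (sstep_perm_l _ _ _ _ HM1') in HM2.
    apply inv_fvar in HM2 as [Hl|[[Q' [f' [Ef [E HZ]]]]|[Q' [Ef [E HZ]]]]]; auto.
    + exfalso; apply notH_suc; exact Hl.
    + subst g'. destruct (IH f' pi sg P2 Q2) as [-> HF]; auto.
      * eapply Permutation_trans; eauto.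
      * eapply Permutation_trans; [exact HQ2|]. eapply noTau_fvar; eauto.
    + discriminate.
Qed.

Lemma Cl_start t m : Cl t m (Ev t [] m).
Proof. left. exists t, []. split; [apply rt_refl|]. left; apply Permutation_refl. Qed.

Lemma sr_lam t s u : SR t s -> kam_star (t, []) (Lam u, []) ->
  exists s' m, kam_star (s, []) (Lam s', []) /\ ~ In m (fv u) /\ ~ In m (fv s') /\
    SR (open u (FVar m)) (open s' (FVar m)).
Proof.
  intros [Wt [Wsg [m [P [Q [F [Hb [HP HQ]]]]]]]] Hk.
  destruct (follow P Q (flatten P) (LB2 u m) Hb (Permutation_refl _)) as
      [P1 [Q1 [N1 [_ [HP1 [Hb1 [HN1 HQ1]]]]]]].
  { apply (cl_reach_lam t m (flatten P) u Wt HP Hk). }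
  destruct (kam_wf0 _ _ _ Wt Hk) as [Wu _]. simpl in Wu.
  destruct (ex_lb2 u m PNil Wu) as [N2 [Hs2 HN2]].
  destruct (ctx_step _ _ _ _ _ Hb1 HP1 Hs2 notH_lambda) as
      [P2 [Q2 [M1 [M2 [M3 [HP2 [Hb2 [HM1 [HM2 [HM3 HQ2]]]]]]]]]].
  { eapply NV_perm; [apply Permutation_sym; exact HN2|apply NV_LB3]. }
  assert (HC1 : Cl s m M1).
  { eapply Cl_sstar; [auto| |exact HM1]. eapply Cl_perm; [apply Permutation_sym; exact HQ1|].
    apply (Cl_sstar s m (flatten Q)); auto. }
  destruct (cl_in _ _ _ _ _ _ Wsg HC1 notH_lambda HM2) as
      [[_ [s' [Hk' [_ HZ]]]]|[f [pi [_ [_ [[f' [_ [E _]]]|[_ [E _]]]]]]]]; try discriminate.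
  destruct (kam_wf0 _ _ _ Wsg Hk') as [Ws' _]. simpl in Ws'.
  assert (Fu : fvlt (fv u) m).
  { pose proof (fv_sub_t _ _ _ Hk (fvlt_l _ _ _ F)) as Fx. unfold fvc in Fx; simpl in Fx.
    rewrite app_nil_r in Fx; auto. }
  assert (Fu' : fvlt (fv s') m).
  { pose proof (fv_sub_t _ _ _ Hk' (fvlt_r _ _ _ F)) as Fx. unfold fvc in Fx; simpl in Fx.
    rewrite app_nil_r in Fx; auto. }
  exists s', m. split; auto. split; [intro Hf; apply Fu in Hf; lia|].
  split; [intro Hf; apply Fu' in Hf; lia|].
  split; [apply wf_open; simpl; auto|]. split; [apply wf_open; simpl; auto|].
  exists (S m), P2, Q2. split; [|split; [auto|split]].
  - apply fvlt_app; intros g Hg; apply fv_open in Hg; apply in_app_or in Hg as [Hg|Hg];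
      try (simpl in Hg; destruct Hg as [<-|[]]; lia).
    + apply Fu in Hg; lia.
    + apply Fu' in Hg; lia.
  - right; left. exists u, m. repeat split; auto. left; eapply Permutation_trans; eauto.
  - eapply Cl_perm; [apply Permutation_sym; exact HQ2|]. eapply Cl_sstar; [| |exact HM3].
    + apply wf_open; simpl; auto.
    + right; left. exists s', m. repeat split; auto.
Qed.

Lemma sr_fvar t s f pi : SR t s -> kam_star (t, []) (FVar f, pi) ->
  exists sg, kam_star (s, []) (FVar f, sg) /\ Forall2 SR pi sg.
Proof.
  intros [Wt [Wsg [m [P [Q [F [Hb [HP HQ]]]]]]]] Hk.
  destruct (follow P Q (flatten P) (Ev (FVar f) pi m) Hb (Permutation_refl _)) as
      [P1 [Q1 [N1 [_ [HP1 [Hb1 [HN1 HQ1]]]]]]].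
  { apply (cl_reach_fvar t m (flatten P) f pi Wt HP Hk). }
  destruct (kam_wf0 _ _ _ Wt Hk) as [_ Wp].
  assert (HC : Cl s m (flatten Q1)).
  { eapply Cl_perm; [apply Permutation_sym; exact HQ1|]. apply (Cl_sstar s m (flatten Q)); auto. }
  assert (Fp : fvlt (flat_map fv pi) m).
  { pose proof (fv_sub_t _ _ _ Hk (fvlt_l _ _ _ F)) as Fx. unfold fvc in Fx; simpl in Fx.
    intros g Hg; apply Fx; simpl; auto. }
  destruct f as [|g].
  - destruct (ex_z pi m PNil Wp) as [N2 [Hs2 HN2]].
    destruct (ctx_step _ _ _ _ _ Hb1 HP1 Hs2 notH_z) as
        [P2 [Q2 [M1 [M2 [M3 [HP2 [Hb2 [HM1 [HM2 [HM3 HQ2]]]]]]]]]].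
    { eapply NV_perm; [apply Permutation_sym; exact HN2|apply NV_K0]. }
    assert (HC1 : Cl s m M1) by (eapply Cl_sstar; eauto).
    destruct (cl_in _ _ _ _ _ _ Wsg HC1 notH_z HM2) as
        [[E _]|[f [sg [Hk' [_ [[f' [_ [E _]]]|[Ef [_ HZ]]]]]]]]; try discriminate.
    subst f. exists sg. split; auto.
    destruct (kam_wf0 _ _ _ Wsg Hk') as [_ Wsg'].
    assert (Fs : fvlt (flat_map fv sg) m).
    { pose proof (fv_sub_t _ _ _ Hk' (fvlt_r _ _ _ F)) as Fx. unfold fvc in Fx; simpl in Fx.
      intros g Hg; apply Fx; simpl; auto. }
    apply (stack_match m pi sg P2 Q2); auto.
    + apply fvlt_app; auto.
    + eapply Permutation_trans; eauto.
    + eapply KSall_perm; [apply Permutation_sym; exact HQ2|]. apply (KSall_sstar _ _ M2); auto.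
      left; left; auto.
  - destruct (ex_suc g pi m PNil Wp) as [N2 [Hs2 HN2]].
    destruct (ctx_step _ _ _ _ _ Hb1 HP1 Hs2 notH_suc) as
        [P2 [Q2 [M1 [M2 [M3 [HP2 [Hb2 [HM1 [HM2 [HM3 HQ2]]]]]]]]]].
    { eapply NV_perm; [apply Permutation_sym; exact HN2|apply NV_Ev]. }
    assert (HC1 : Cl s m M1) by (eapply Cl_sstar; eauto).
    destruct (cl_in _ _ _ _ _ _ Wsg HC1 notH_suc HM2) as
        [[E _]|[f [sg [Hk' [_ [[f' [Ef [_ HZ]]]|[_ [E _]]]]]]]]; try discriminate.
    subst f.
    destruct (kam_wf0 _ _ _ Wsg Hk') as [_ Wsg'].
    assert (Fs : fvlt (flat_map fv sg) m).
    { pose proof (fv_sub_t _ _ _ Hk' (fvlt_r _ _ _ F)) as Fx. unfold fvc in Fx; simpl in Fx.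
      intros g' Hg; apply Fx; simpl; auto. }
    destruct (num_match m g f' pi sg P2 Q2) as [-> HF]; auto.
    + apply fvlt_app; auto.
    + eapply Permutation_trans; eauto.
    + eapply Permutation_trans; [exact HQ2|]. eapply noTau_fvar; eauto.
    + exists sg; split; auto.
Qed.

From Stdlib Require Import List Arith Relations Permutation Lia.
Import ListNotations.

Fixpoint ren (g : nat -> nat) (t : term) : term :=
  match t with
  | FVar f => FVar (g f)
  | BVar i => BVar i
  | Lam t => Lam (ren g t)
  | App t s => App (ren g t) (ren g s)
  end.

Lemma ren_open g t : forall k u, ren g (open_at k u t) = open_at k (ren g u) (ren g t).
Proof. induction t; intros k u; simpl; auto; try (destruct (n =? k); auto); f_equal; auto. Qed.

Lemma ren_comp g h t : ren g (ren h t) = ren (fun x => g (h x)) t.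
Proof. induction t; simpl; f_equal; auto. Qed.

Lemma ren_ext g h t : (forall x, In x (fv t) -> g x = h x) -> ren g t = ren h t.
Proof.
  induction t; simpl; intros H; f_equal; auto.
  - apply IHt1; intros; apply H, in_or_app; auto.
  - apply IHt2; intros; apply H, in_or_app; auto.
Qed.

Lemma ren_id t : ren (fun x => x) t = t.
Proof. induction t; simpl; f_equal; auto. Qed.

Lemma fv_ren g t : fv (ren g t) = map g (fv t).
Proof. induction t; simpl; auto. rewrite map_app; f_equal; auto. Qed.

Lemma wf_ren g t : forall k, wf_at k t -> wf_at k (ren g t).
Proof. induction t; simpl; intuition. Qed.

Lemma kam_step_ren g c c' : kam_step c c' ->
  kam_step (ren g (fst c), map (ren g) (snd c)) (ren g (fst c'), map (ren g) (snd c')).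
Proof.
  intros H; inversion H; subst; simpl.
  - constructor.
  - unfold open. rewrite ren_open. constructor.
Qed.

Lemma kam_star_ren g c c' : kam_star c c' ->
  kam_star (ren g (fst c), map (ren g) (snd c)) (ren g (fst c'), map (ren g) (snd c')).
Proof.
  induction 1.
  - apply rt_step, kam_step_ren; auto.
  - apply rt_refl.
  - eapply rt_trans; eauto.
Qed.

Lemma ren_inv g g' t : (forall x, g' (g x) = x) -> ren g' (ren g t) = t.
Proof. intros H. rewrite ren_comp. rewrite <- (ren_id t) at 2. apply ren_ext; auto. Qed.

Lemma SR_sym t s : SR t s -> SR s t.
Proof.
  intros [Wt [Ws [m [P [Q [F [Hb [HP HQ]]]]]]]]. split; auto. split; auto.
  exists m, Q, P. split; [|split; [apply bb_sym; auto|auto]].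
  intros f Hf; apply F; apply in_app_or in Hf as [?|?]; apply in_or_app; auto.
Qed.

Definition SRr (a b : term) : Prop :=
  exists g g' t s, (forall x, g' (g x) = x) /\ (forall x, g (g' x) = x) /\ SR t s /\
    a = ren g t /\ b = ren g s.

Definition swp (f h x : nat) := if x =? f then h else if x =? h then f else x.

Lemma swp_inv f h x : swp f h (swp f h x) = x.
Proof.
  unfold swp. destruct (Nat.eqb_spec x f) as [E|E];
  [|destruct (Nat.eqb_spec x h) as [E'|E']];
  repeat (match goal with |- context [?a =? ?b] =>
            match a with context [if _ then _ else _] => fail 1 | _ => destruct (Nat.eqb_spec a b) end end);
  lia.
Qed.

Lemma swp_fix f h x : x <> f -> x <> h -> swp f h x = x.
Proof. intros H1 H2. unfold swp. destruct (Nat.eqb_spec x f); [lia|]. destruct (Nat.eqb_spec x h); [lia|]. auto. Qed.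

Lemma swp_h f h : swp f h h = f.
Proof. unfold swp. destruct (Nat.eqb_spec h f); auto. rewrite Nat.eqb_refl; auto. Qed.

Lemma ren_swp_fix f h t : ~ In f (fv t) -> ~ In h (fv t) -> ren (swp f h) t = t.
Proof.
  intros H1 H2. rewrite <- (ren_id t) at 2. apply ren_ext. intros x Hx.
  apply swp_fix; intro E; subst; auto.
Qed.

Lemma Forall2_ren g g' pi sg : (forall x, g (g' x) = x) -> (forall x, g' (g x) = x) ->
  Forall2 SR (map (ren g') pi) sg -> Forall2 SRr pi (map (ren g) sg).
Proof.
  intros H1 H2. revert sg. induction pi; intros sg H; inversion H; subst; simpl; constructor; auto.
  exists g, g', (ren g' a), y. split; [auto|split; [auto|split; [auto|split; [|auto]]]].
  rewrite (ren_inv g' g); auto.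
Qed.

Lemma map_ren_inv g g' pi : (forall x, g' (g x) = x) -> map (ren g') (map (ren g) pi) = pi.
Proof. intros H. induction pi; simpl; f_equal; auto. apply ren_inv; auto. Qed.

Lemma SRr_bisim : nf_bisimulation SRr.
Proof.
  split.
  { intros a b [g [g' [t [s [H1 [H2 [H3 [-> ->]]]]]]]]. exists g, g', s, t.
    split; [auto|split; [auto|split; [apply SR_sym; auto|auto]]]. }
  intros a b [g [g' [t [s [Hgg [Hgg' [HS [-> ->]]]]]]]]. split.
  - intros t' Hk.
    apply (kam_star_ren g') in Hk. simpl in Hk. rewrite ren_inv in Hk by auto.
    destruct (sr_lam _ _ _ HS Hk) as [s0 [m [Hk' [Hm1 [Hm2 HS']]]]].
    exists (ren g s0). split.
    { apply (kam_star_ren g) in Hk'. simpl in Hk'. exact Hk'. }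
    intros f Hf1 Hf2.
    assert (Hgm1 : ~ In (g m) (fv t')).
    { intro Hx. apply Hm1. rewrite fv_ren. rewrite <- (Hgg m). apply in_map; auto. }
    assert (Hgm2 : ~ In (g m) (fv (ren g s0))).
    { intro Hx. apply Hm2. rewrite fv_ren in Hx. apply in_map_iff in Hx as [y [Ey Hy]].
      rewrite <- (Hgg y), Ey, Hgg in Hy. auto. }
    exists (fun x => swp f (g m) (g x)), (fun x => g' (swp f (g m) x)),
      (open (ren g' t') (FVar m)), (open s0 (FVar m)).
    split; [intros x; rewrite swp_inv; auto|].
    split; [intros x; rewrite Hgg', swp_inv; auto|].
    split; auto. split.
    + assert (E : ren (fun x => swp f (g m) (g (g' x))) t' = t').
      { rewrite <- (ren_comp (swp f (g m)) (fun x => g (g' x))).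
        rewrite (ren_ext (fun x => g (g' x)) (fun x => x)) by auto. rewrite ren_id.
        apply ren_swp_fix; auto. }
      unfold open. rewrite ren_open. simpl. rewrite swp_h. rewrite ren_comp. rewrite E. auto.
    + assert (E : ren (fun x => swp f (g m) (g x)) s0 = ren g s0).
      { rewrite <- (ren_comp (swp f (g m)) g). apply ren_swp_fix; auto. }
      unfold open. rewrite ren_open. simpl. rewrite swp_h. rewrite E. auto.
  - intros f pi Hk.
    apply (kam_star_ren g') in Hk. simpl in Hk. rewrite ren_inv in Hk by auto.
    destruct (sr_fvar _ _ _ _ HS Hk) as [sg [Hk' HF]].
    exists (map (ren g) sg). split.
    + apply (kam_star_ren g) in Hk'. simpl in Hk'. rewrite Hgg' in Hk'. exact Hk'.
    + eapply Forall2_ren; eauto.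
Qed.

Lemma soundness t s n : well_formed t -> well_formed s ->
  (forall f, In f (fv t) \/ In f (fv s) -> f < n) ->
  barbed_bisimilar H_names (tr_ev t [] n) (tr_ev s [] n) -> nf_bisimilar t s.
Proof.
  intros Wt Ws F Hb. exists SRr. split; [apply SRr_bisim|].
  exists (fun x => x), (fun x => x), t, s.
  split; [auto|split; [auto|split; [|split; symmetry; apply ren_id]]].
  split; auto. split; auto.
  exists n, (tr_ev t [] n), (tr_ev s [] n). split; [|split; [auto|split]].
  - intros f Hf. apply F. apply in_app_or in Hf; auto.
  - eapply Cl_perm; [apply Permutation_sym, flatten_tr_ev; auto|apply Cl_start].
  - eapply Cl_perm; [apply Permutation_sym, flatten_tr_ev; auto|apply Cl_start].
Qed.

Theorem corollary4p15 (t s : term) :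
  well_formed t -> well_formed s ->
  (nf_bisimilar t s <->
   exists n : nat,
     (forall f, In f (fv t) \/ In f (fv s) -> f < n) /\
     barbed_bisimilar H_names (tr_ev t [] n) (tr_ev s [] n)).
Proof.
  intros Wt Ws. split.
  - apply completeness; auto.
  - intros [n [F Hb]]. eapply soundness; eauto.
Qed.
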